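(* Let $\alpha>0$, $\beta>0$, $M\in\mathbb{R}$, and let $H:=\frac12\bigl(\frac{6\alpha}{\beta M^2}\bigr)^{1/3}$, $V:=MH$ (with the understanding that the canonical staircase $S_{H,V}$ is identically $0$ when $M=0$). Then the set of entire local minimizers of $\mathcal{G}(\alpha,\beta,Mx,\cdot,\cdot)$ coincides with the set $\mathrm{Obl}(H,V)$ of oblique translations of $S_{H,V}$ (in particular, when $M=0$ the only entire local minimizer is the zero function).
   Context: For a bounded interval $(a,b)$, $S((a,b))$ is the space of step functions with finitely many jumps (BV functions with zero diffuse derivative and finite jump set $S_u$), with $u(a),u(b)$ denoting the values near the endpoints; $S_{loc}(\mathbb{R})$ is the set of $u:\mathbb{R}\to\mathbb{R}$ whose restriction to every bounded interval lies in $S((a,b))$. $\mathcal{G}(\alpha,\beta,f,(a,b),u)=\alpha\,\#(S_u\cap(a,b))+\beta\int_a^b(u-f)^2dx$. A function $v\in S((a,b))$ is a local minimizer of $\mathcal{G}(\alpha,\beta,f,(a,b),\cdot)$ if $\mathcal{G}(\alpha,\beta,f,(a,b),v)\le\mathcal{G}(\alpha,\beta,f,(a,b),u)$ for all $u\in S((a,b))$ with $u(a)=v(a)$, $u(b)=v(b)$; $v\in S_{loc}(\mathbb{R})$ is an entire local minimizer if its restriction to every bounded interval is a local minimizer there. Here $f$ is $x\mapsto Mx$. Canonical staircase: $S(x)=2\lfloor(x+1)/2\rfloor$, $S_{H,V}(x)=V\,S(x/H)$; $\mathrm{Obl}(H,V)$ is the set of functions $x\mapsto S_{H,V}(x-H\tau_0)+V\tau_0$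 with $\tau_0\in[-1,1]$. *)

(* Defs.v *)
From Stdlib Require Import Reals List.
From Coquelicot Require Import Coquelicot.
Open Scope R_scope.

(* Values at
   those finitely many points are arbitrary (irrelevant for the BV class). *)
Definition is_step (a b : R) (u : R -> R) : Prop :=
  exists l : list R,
    (forall x, In x l -> a < x < b) /\
    (forall x y, a < x -> x <= y -> y < b ->
       (forall z, In z l -> ~ (x <= z <= y)) -> u x = u y).

Definition is_jump (u : R -> R) (x : R) : Prop :=
  forall eps, 0 < eps ->
    exists y z, Rabs (y - x) < eps /\ y <> x /\ Rabs (z - x) < eps /\ z <> x
                /\ u y <> u z.

Definition jump_count (a b : R) (u : R -> R) (n : nat) : Prop :=
  exists l : list R, NoDup l /\ length l = n /\
    (forall x, In x l <-> (a < x < b /\ is_jump u x)).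

(* G(alpha,beta,f,(a,b),u) given that #(S_u ∩ (a,b)) = n *)
Definition G_with (alpha beta : R) (f : R -> R) (a b : R) (u : R -> R) (n : nat) : R :=
  alpha * INR n + beta * RInt (fun x => (u x - f x) ^ 2) a b.

(* u(a) = v(a), u(b) = v(b): the values near the endpoints agree *)
Definition same_traces (a b : R) (u v : R -> R) : Prop :=
  (exists eps, 0 < eps /\ forall x, a < x < a + eps -> u x = v x) /\
  (exists eps, 0 < eps /\ forall x, b - eps < x < b -> u x = v x).

Definition local_minimizer (alpha beta : R) (f : R -> R) (a b : R) (v : R -> R) : Prop :=
  is_step a b v /\
  forall u, is_step a b u -> same_traces a b u v ->
    forall n m, jump_count a b v n -> jump_count a b u m ->
      G_with alpha beta f a b v n <= G_with alpha beta f a b u m.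

Definition S_loc (v : R -> R) : Prop := forall a b, a < b -> is_step a b v.

Definition entire_local_minimizer (alpha beta : R) (f : R -> R) (v : R -> R) : Prop :=
  S_loc v /\ forall a b, a < b -> local_minimizer alpha beta f a b v.

Definition stair (x : R) : R := 2 * IZR (floor ((x + 1) / 2)).
Definition stairHV (H V : R) (x : R) : R := V * stair (x / H).

Definition Hpar (alpha beta M : R) : R := / 2 * Rpower (6 * alpha / (beta * M ^ 2)) (/ 3).
Definition Vpar (alpha beta M : R) : R := M * Hpar alpha beta M.

Definition oblique (alpha beta M tau0 : R) (x : R) : R :=
  if Req_EM_T M 0 then 0
  else stairHV (Hpar alpha beta M) (Vpar alpha beta M) (x - Hpar alpha beta M * tau0)
       + Vpar alpha beta M * tau0.

(* v agrees with w except at finitely many points of every bounded interval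
   (i.e. v and w represent the same element of S_loc) *)
Definition same_class (v w : R -> R) : Prop :=
  forall a b, a < b -> exists l : list R,
    forall x, a < x < b -> ~ In x l -> v x = w x.

(* Main.v *)
Require Import Defs.
From Stdlib Require Import Reals.
From Stdlib Require Import Lra Lia List ClassicalEpsilon Classical ZArith FunctionalExtensionality.
From Coquelicot Require Import Coquelicot.
Open Scope R_scope.

Module MA.

Definition ltb (x y : R) : bool := if Rlt_dec x y then true else false.
Lemma ltb_spec x y : ltb x y = true <-> x < y.
Proof. unfold ltb; destruct (Rlt_dec x y); split; intros; auto; try discriminate; lra. Qed.

Definition trR (u : R -> R) (a c : R) := exists e, 0 < e /\ forall x, a < x < a + e -> u x = c.
Definition trL (u : R -> R) (b c : R) := exists e, 0 < e /\ forall x, b - e < x < b -> u x = c.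

Lemma no_pts_right (l : list R) (p : R) : exists e, 0 < e /\ forall z, In z l -> ~ (p < z < p + e).
Proof.
  induction l as [|z l IH].
  - exists 1; split; [lra|]; intros z [].
  - destruct IH as [e [He H]].
    destruct (Rlt_dec p z) as [Hz|Hz].
    + exists (Rmin e (z - p)); split.
      * apply Rmin_pos; lra.
      * intros w [<-|Hw]; [|specialize (H w Hw)]; pose proof (Rmin_r e (z-p)); pose proof (Rmin_l e (z-p)); lra.
    + exists e; split; auto. intros w [<-|Hw]; [lra|auto].
Qed.

Lemma no_pts_left (l : list R) (p : R) : exists e, 0 < e /\ forall z, In z l -> ~ (p - e < z < p).
Proof.
  induction l as [|z l IH].
  - exists 1; split; [lra|]; intros z [].
  - destruct IH as [e [He H]].
    destruct (Rlt_dec z p) as [Hz|Hz].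
    + exists (Rmin e (p - z)); split.
      * apply Rmin_pos; lra.
      * intros w [<-|Hw]; [|specialize (H w Hw)]; pose proof (Rmin_r e (p-z)); pose proof (Rmin_l e (p-z)); lra.
    + exists e; split; auto. intros w [<-|Hw]; [lra|auto].
Qed.

Lemma no_pts_both (l : list R) (p : R) : exists e, 0 < e /\ forall z, In z l -> z <> p -> ~ (p - e < z < p + e).
Proof.
  destruct (no_pts_left l p) as [e1 [He1 H1]]. destruct (no_pts_right l p) as [e2 [He2 H2]].
  exists (Rmin e1 e2); split; [apply Rmin_pos; lra|].
  intros z Hz Hne Hc. pose proof (Rmin_r e1 e2); pose proof (Rmin_l e1 e2).
  destruct (Rlt_dec z p); [apply (H1 z Hz); lra|]. apply (H2 z Hz); lra.
Qed.

Lemma step_trR a b u p : is_step a b u -> a <= p < b -> exists c, trR u p c.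
Proof.
  intros [l [Hl Hs]] Hp. destruct (no_pts_right l p) as [e [He H]].
  set (e' := Rmin e (b - p)). assert (0 < e') by (apply Rmin_pos; lra).
  assert (e' <= e) by apply Rmin_l. assert (e' <= b - p) by apply Rmin_r.
  exists (u (p + e'/2)), e'; split; auto. intros x Hx.
  destruct (Rle_dec x (p + e'/2)).
  - apply Hs; try lra. intros z Hz Hc. apply (H z Hz). lra.
  - symmetry; apply Hs; try lra. intros z Hz Hc. apply (H z Hz). lra.
Qed.

Lemma step_trL a b u p : is_step a b u -> a < p <= b -> exists c, trL u p c.
Proof.
  intros [l [Hl Hs]] Hp. destruct (no_pts_left l p) as [e [He H]].
  set (e' := Rmin e (p - a)). assert (0 < e') by (apply Rmin_pos; lra).
  assert (e' <= e) by apply Rmin_l. assert (e' <= p - a) by apply Rmin_r.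
  exists (u (p - e'/2)), e'; split; auto. intros x Hx.
  destruct (Rle_dec x (p - e'/2)).
  - apply Hs; try lra. intros z Hz Hc. apply (H z Hz). lra.
  - symmetry; apply Hs; try lra. intros z Hz Hc. apply (H z Hz). lra.
Qed.

Lemma trR_unique u p c c' : trR u p c -> trR u p c' -> c = c'.
Proof.
  intros [e [He H]] [e' [He' H']].
  set (m := Rmin e e'). assert (0 < m) by (apply Rmin_pos; lra).
  assert (m <= e) by apply Rmin_l. assert (m <= e') by apply Rmin_r.
  rewrite <- (H (p + m/2)), <- (H' (p + m/2)); auto; lra.
Qed.

Lemma trL_unique u p c c' : trL u p c -> trL u p c' -> c = c'.
Proof.
  intros [e [He H]] [e' [He' H']].
  set (m := Rmin e e'). assert (0 < m) by (apply Rmin_pos; lra).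
  assert (m <= e) by apply Rmin_l. assert (m <= e') by apply Rmin_r.
  rewrite <- (H (p - m/2)), <- (H' (p - m/2)); auto; lra.
Qed.

Lemma trR_const a b u c p : (forall x, a < x < b -> u x = c) -> a <= p < b -> trR u p c.
Proof. intros H Hp. exists (b - p); split; [lra|]. intros x Hx; apply H; lra. Qed.
Lemma trL_const a b u c p : (forall x, a < x < b -> u x = c) -> a < p <= b -> trL u p c.
Proof. intros H Hp. exists (p - a); split; [lra|]. intros x Hx; apply H; lra. Qed.

Lemma step_restrict a b u s t : is_step a b u -> a <= s -> s < t -> t <= b -> is_step s t u.
Proof.
  intros [l [Hl Hs]] H1 H2 H3.
  exists (filter (fun z => andb (ltb s z) (ltb z t)) l); split.
  - intros x Hx. apply filter_In in Hx as [_ Hx]. apply andb_prop in Hx as [Ha Hb].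
    apply ltb_spec in Ha; apply ltb_spec in Hb; lra.
  - intros x y Hx Hxy Hy Hn. apply Hs; try lra. intros z Hz Hc.
    apply (Hn z); auto. apply filter_In; split; auto.
    apply andb_true_intro; split; apply ltb_spec; lra.
Qed.

Lemma step_glue a p b u : a < p < b -> is_step a p u -> is_step p b u -> is_step a b u.
Proof.
  intros Hp [l1 [Hl1 Hs1]] [l2 [Hl2 Hs2]].
  exists (l1 ++ p :: l2); split.
  - intros x Hx. apply in_app_or in Hx as [Hx|[<-|Hx]]; [apply Hl1 in Hx|lra|apply Hl2 in Hx]; lra.
  - intros x y Hx Hxy Hy Hn.
    assert (Hp' : ~ (x <= p <= y)) by (apply Hn; apply in_or_app; right; left; auto).
    destruct (Rlt_dec y p).
    + apply Hs1; try lra. intros z Hz; apply Hn; apply in_or_app; left; auto.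
    + apply Hs2; try lra. intros z Hz; apply Hn; apply in_or_app; right; right; auto.
Qed.

Lemma step_const a b u c : (forall x, a < x < b -> u x = c) -> is_step a b u.
Proof.
  intros H. exists nil; split; [intros x []|]. intros x y Hx Hxy Hy _. rewrite !H; auto; lra.
Qed.

Lemma step_ext a b u w : (forall x, a < x < b -> u x = w x) -> is_step a b u -> is_step a b w.
Proof.
  intros H [l [Hl Hs]]. exists l; split; auto. intros x y Hx Hxy Hy Hn.
  rewrite <- !H by lra. apply Hs; auto.
Qed.

Lemma step_ind (u : R -> R) (P : R -> R -> Prop)
  (Hc : forall a b c, a < b -> (forall x, a < x < b -> u x = c) -> P a b)
  (Hsp : forall a p b, a < p < b -> is_step a p u -> is_step p b u -> P a p -> P p b -> P a b) :
  forall a b, a < b -> is_step a b u -> P a b.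
Proof.
  assert (Hmain : forall n a b l, (length l <= n)%nat -> a < b ->
     (forall x, In x l -> a < x < b) ->
     (forall x y, a < x -> x <= y -> y < b -> (forall z, In z l -> ~ (x <= z <= y)) -> u x = u y) ->
     P a b).
  { induction n as [|n IH]; intros a b l Hlen Hab Hl Hs.
    - destruct l; [|simpl in Hlen; lia].
      apply (Hc a b (u ((a+b)/2))); auto. intros x Hx.
      destruct (Rle_dec x ((a+b)/2)).
      + apply Hs; try lra. intros z [].
      + symmetry; apply Hs; try lra. intros z [].
    - destruct l as [|p l'].
      + apply (Hc a b (u ((a+b)/2))); auto. intros x Hx.
        destruct (Rle_dec x ((a+b)/2)).
        * apply Hs; try lra. intros z [].
        * symmetry; apply Hs; try lra. intros z [].
      + assert (Hp : a < p < b) by (apply Hl; left; auto).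
        set (l1 := filter (fun z => ltb z p) (p :: l')).
        set (l2 := filter (fun z => ltb p z) (p :: l')).
        assert (Hl1 : l1 = filter (fun z => ltb z p) l').
        { unfold l1; simpl. destruct (ltb p p) eqn:E; auto. apply ltb_spec in E; lra. }
        assert (Hl2 : l2 = filter (fun z => ltb p z) l').
        { unfold l2; simpl. destruct (ltb p p) eqn:E; auto. apply ltb_spec in E; lra. }
        assert (S1 : forall x, In x l1 -> a < x < p).
        { intros x Hx. apply filter_In in Hx as [Hx Hx']. apply ltb_spec in Hx'. apply Hl in Hx; lra. }
        assert (S2 : forall x, In x l2 -> p < x < b).
        { intros x Hx. apply filter_In in Hx as [Hx Hx']. apply ltb_spec in Hx'. apply Hl in Hx; lra. }
        assert (T1 : forall x y, a < x -> x <= y -> y < p -> (forall z, In z l1 -> ~ (x <= z <= y)) -> u x = u y).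
        { intros x y H1 H2 H3 Hn. apply Hs; try lra. intros z Hz Hc'. apply (Hn z); auto.
          apply filter_In; split; auto. apply ltb_spec; lra. }
        assert (T2 : forall x y, p < x -> x <= y -> y < b -> (forall z, In z l2 -> ~ (x <= z <= y)) -> u x = u y).
        { intros x y H1 H2 H3 Hn. apply Hs; try lra. intros z Hz Hc'. apply (Hn z); auto.
          apply filter_In; split; auto. apply ltb_spec; lra. }
        apply (Hsp a p b Hp).
        * exists l1; split; auto.
        * exists l2; split; auto.
        * apply (IH a p l1); auto; try lra. rewrite Hl1. simpl in Hlen.
          pose proof (filter_length_le (fun z => ltb z p) l'). lia.
        * apply (IH p b l2); auto; try lra. rewrite Hl2. simpl in Hlen.
          pose proof (filter_length_le (fun z => ltb p z) l'). lia. }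
  intros a b Hab [l [Hl Hs]]. apply (Hmain (length l) a b l); auto.
Qed.

Lemma jump_iff u p c c' : trL u p c -> trR u p c' -> (is_jump u p <-> c <> c').
Proof.
  intros [e [He H]] [e' [He' H']]. split.
  - intros J Heq. subst c'. set (m := Rmin e e').
    assert (0 < m) by (apply Rmin_pos; lra). assert (m <= e) by apply Rmin_l. assert (m <= e') by apply Rmin_r.
    destruct (J m H0) as [y [z [Hy [Hy' [Hz [Hz' Hne]]]]]].
    apply Hne. assert (Hw0 : forall w, Rabs (w - p) < m -> w <> p -> u w = c).
    { intros w Hw Hw'. apply Rabs_def2 in Hw. destruct (Rlt_dec w p).
      - apply H; lra. - apply H'. split; [|lra]. destruct (Rle_lt_or_eq_dec p w); [lra|lra|congruence]. }
    rewrite !Hw0; auto.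
  - intros Hne eps Heps. set (m := Rmin eps (Rmin e e')).
    assert (0 < m) by (repeat apply Rmin_pos; lra).
    assert (m <= eps) by apply Rmin_l. assert (m <= Rmin e e') by apply Rmin_r.
    assert (Rmin e e' <= e) by apply Rmin_l. assert (Rmin e e' <= e') by apply Rmin_r.
    exists (p - m/2), (p + m/2). repeat split.
    + rewrite Rabs_left; lra. + lra. + rewrite Rabs_right; lra. + lra.
    + rewrite H, H'; auto; lra.
Qed.

Lemma const_nojump a b u c p : (forall x, a < x < b -> u x = c) -> a < p < b -> ~ is_jump u p.
Proof.
  intros H Hp. rewrite (jump_iff u p c c); [tauto| |]. apply (trL_const a b); auto; lra.
  apply (trR_const a b); auto; lra.
Qed.

Lemma step_jump_dec a b u p : is_step a b u -> a < p < b ->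
  exists c c', trL u p c /\ trR u p c' /\ (is_jump u p <-> c <> c').
Proof.
  intros Hs Hp. destruct (step_trL a b u p Hs) as [c Hc]; [lra|].
  destruct (step_trR a b u p Hs) as [c' Hc']; [lra|].
  exists c, c'; repeat split; auto; apply jump_iff; auto.
Qed.

Lemma jc_unique a b u n m : jump_count a b u n -> jump_count a b u m -> n = m.
Proof.
  intros [l1 [N1 [L1 H1]]] [l2 [N2 [L2 H2]]]. subst.
  assert (incl l1 l2) by (intros x Hx; apply H2, H1, Hx).
  assert (incl l2 l1) by (intros x Hx; apply H1, H2, Hx).
  pose proof (NoDup_incl_length N1 H). pose proof (NoDup_incl_length N2 H0). lia.
Qed.

Lemma jc_const a b u c : (forall x, a < x < b -> u x = c) -> jump_count a b u 0.
Proof.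
  intros H. exists nil; split; [constructor|split; [reflexivity|]].
  intros x; split; [intros []|]. intros [Hx J]. exfalso; apply (const_nojump a b u c x H Hx J).
Qed.

Lemma NoDup_app_disj (l1 l2 : list R) : NoDup l1 -> NoDup l2 -> (forall x, In x l1 -> ~ In x l2) -> NoDup (l1 ++ l2).
Proof.
  induction l1 as [|z l1 IH]; intros N1 N2 D; simpl; auto.
  inversion N1; subst. constructor.
  - intros Hin. apply in_app_or in Hin as [Hin|Hin]; [tauto|]. apply (D z); [left|]; auto.
  - apply IH; auto. intros x Hx; apply D; right; auto.
Qed.

Lemma jc_split a p b u n1 n2 : a < p < b -> jump_count a p u n1 -> jump_count p b u n2 ->
  jump_count a b u (n1 + n2 + (if excluded_middle_informative (is_jump u p) then 1 else 0))%nat.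
Proof.
  intros Hp [l1 [N1 [L1 H1]]] [l2 [N2 [L2 H2]]].
  destruct (excluded_middle_informative (is_jump u p)) as [J|J].
  - exists (l1 ++ p :: l2). split; [|split].
    + apply NoDup_app_disj; auto.
      * constructor; auto. intros Hin. apply H2 in Hin. lra.
      * intros x Hx [<-|Hx']; [apply H1 in Hx; lra|]. apply H1 in Hx; apply H2 in Hx'; lra.
    + rewrite length_app; simpl; lia.
    + intros x; split.
      * intros Hx. apply in_app_or in Hx as [Hx|[<-|Hx]]; [apply H1 in Hx|split;[lra|auto]|apply H2 in Hx];
        destruct Hx; split; auto; lra.
      * intros [Hx Jx]. apply in_or_app. destruct (Rlt_dec x p) as [r|r]; [left; apply H1; split; auto; lra|].
        right. destruct (Req_dec x p) as [->|ne]; [left; auto|right; apply H2; split; auto; lra].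
  - exists (l1 ++ l2). split; [|split].
    + apply NoDup_app_disj; auto. intros x Hx Hx'. apply H1 in Hx; apply H2 in Hx'; lra.
    + rewrite length_app; simpl; lia.
    + intros x; split.
      * intros Hx. apply in_app_or in Hx as [Hx|Hx]; [apply H1 in Hx|apply H2 in Hx];
        destruct Hx; split; auto; lra.
      * intros [Hx Jx]. apply in_or_app. destruct (Rlt_dec x p) as [r|r]; [left; apply H1; split; auto; lra|].
        destruct (Req_dec x p) as [->|ne]; [tauto|right; apply H2; split; auto; lra].
Qed.

Lemma jc_exists a b u : a < b -> is_step a b u -> exists n, jump_count a b u n.
Proof.
  apply (step_ind u (fun a b => exists n, jump_count a b u n)).
  - intros a' b' c _ H. exists 0%nat. apply (jc_const a' b' u c H).
  - intros a' p b' Hp _ _ [n1 H1] [n2 H2]. eexists; apply (jc_split a' p b' u n1 n2 Hp H1 H2).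
Qed.

Definition Jn a b u : nat := epsilon (inhabits 0%nat) (fun n => jump_count a b u n).

Lemma Jn_spec a b u : a < b -> is_step a b u -> jump_count a b u (Jn a b u).
Proof. intros H1 H2. unfold Jn. apply epsilon_spec. apply jc_exists; auto. Qed.

Lemma Jn_eq a b u n : a < b -> is_step a b u -> jump_count a b u n -> Jn a b u = n.
Proof. intros. eapply jc_unique; [apply Jn_spec|]; eauto. Qed.

End MA.
Import MA.

Module MB.

Definition sqf (M : R) (u : R -> R) := fun x => (u x - M * x) ^ 2.
Definition Pc (M c s t : R) := c^2*(t-s) - c*M*(t^2-s^2) + M^2*(t^3-s^3)/3.

Lemma ex_int_piece M u c s t : s < t -> (forall x, s < x < t -> u x = c) -> ex_RInt (sqf M u) s t.
Proof.
  intros Hst H. apply (ex_RInt_ext (fun x => (c - M * x)^2)).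
  - intros x Hx. rewrite Rmin_left in Hx by lra. rewrite Rmax_right in Hx by lra.
    unfold sqf; rewrite H; auto.
  - apply (@ex_RInt_continuous R_CompleteNormedModule). intros z _.
    apply (ex_derive_continuous (fun x => (c - M * x)^2)). auto_derive; auto.
Qed.

Lemma int_piece M u c s t : s < t -> (forall x, s < x < t -> u x = c) -> RInt (sqf M u) s t = Pc M c s t.
Proof.
  intros Hst H. rewrite (RInt_ext (sqf M u) (fun x => (c - M * x)^2)).
  2:{ intros x Hx. rewrite Rmin_left in Hx by lra. rewrite Rmax_right in Hx by lra.
      unfold sqf; rewrite H; auto. }
  apply is_RInt_unique.
  assert (Hd := is_RInt_derive (fun x => c^2*x - c*M*x^2 + M^2*x^3/3) (fun x => (c - M*x)^2) s t).
  assert (E : Pc M c s t = (c^2*t - c*M*t^2 + M^2*t^3/3) - (c^2*s - c*M*s^2 + M^2*s^3/3)) by (unfold Pc; field).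
  rewrite E. apply Hd.
  - intros x _. auto_derive; auto. field.
  - intros x _. apply (ex_derive_continuous (fun x => (c - M * x)^2)). auto_derive; auto.
Qed.

Lemma ex_int_step M u a b : a < b -> is_step a b u -> ex_RInt (sqf M u) a b.
Proof.
  apply (step_ind u (fun a b => ex_RInt (sqf M u) a b)).
  - intros a' b' c H1 H2. apply (ex_int_piece M u c); auto.
  - intros a' p b' _ _ _ H1 H2. apply (ex_RInt_Chasles _ a' p b'); auto.
Qed.

Lemma int_split M u a p b : a < p < b -> is_step a b u ->
  RInt (sqf M u) a b = RInt (sqf M u) a p + RInt (sqf M u) p b.
Proof.
  intros Hp Hs. rewrite <- (RInt_Chasles (sqf M u) a p b).
  - reflexivity.
  - apply ex_int_step; [lra|]. apply (step_restrict a b); auto; lra.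
  - apply ex_int_step; [lra|]. apply (step_restrict a b); auto; lra.
Qed.

Definition cost (al be M : R) (u : R -> R) (a b : R) := al * INR (Jn a b u) + be * RInt (sqf M u) a b.
Definition jind (c c' : R) : R := if Req_EM_T c c' then 0 else 1.

Lemma cost_split al be M u a p b c c' : a < p < b -> is_step a b u -> trL u p c -> trR u p c' ->
  cost al be M u a b = cost al be M u a p + cost al be M u p b + al * jind c c'.
Proof.
  intros Hp Hs HL HR.
  assert (S1 : is_step a p u) by (apply (step_restrict a b); auto; lra).
  assert (S2 : is_step p b u) by (apply (step_restrict a b); auto; lra).
  pose proof (jc_split a p b u _ _ Hp (Jn_spec a p u ltac:(lra) S1) (Jn_spec p b u ltac:(lra) S2)) as J.
  unfold cost. rewrite (Jn_eq a b u _ ltac:(lra) Hs J). rewrite (int_split M u a p b Hp Hs).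
  pose proof (jump_iff u p c c' HL HR) as JI.
  unfold jind. destruct (excluded_middle_informative (is_jump u p)) as [j|j];
  destruct (Req_EM_T c c') as [e|e]; try tauto.
  - rewrite !plus_INR. simpl. ring.
  - rewrite !plus_INR. simpl. ring.
Qed.

Lemma cost_const al be M u a b c : a < b -> (forall x, a < x < b -> u x = c) ->
  cost al be M u a b = be * Pc M c a b.
Proof.
  intros Hab H. unfold cost. rewrite (Jn_eq a b u 0%nat Hab (step_const a b u c H) (jc_const a b u c H)).
  rewrite (int_piece M u c a b Hab H). simpl. ring.
Qed.

Lemma cost_nonneg_int M u a b : a < b -> is_step a b u -> 0 <= RInt (sqf M u) a b.
Proof.
  intros Hab Hs. apply RInt_ge_0; [lra|apply ex_int_step; auto|]. intros; unfold sqf; apply pow2_ge_0.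
Qed.

End MB.
Import MB.

Module MC.

Lemma mul_nn_np a b : 0 <= a -> b <= 0 -> a*b <= 0.
Proof. intros; nra. Qed.
Lemma mul_pos_np a b : 0 <= a -> b <= 0 -> a*b <= 0.
Proof. intros; nra. Qed.

Lemma abs_le x B : Rabs x <= B -> -B <= x <= B.
Proof. unfold Rabs; destruct (Rcase_abs x); lra. Qed.

Set Default Proof Using "All".
Section Cal.
Variables al be M Y : R.
Hypothesis hbe : 0 < be.
Hypothesis hM : 0 < M.
Hypothesis hY : 0 < Y.
Hypothesis Hal : al = 4*be*Y^3/(3*M).

Definition G0 y := be*y^3/3 - be*Y^2*y.
Definition clamp y := Rmax (-Y) (Rmin Y y).
Definition gg y := - G0 (clamp y) / M.
Definition Phi x c := be*Y^2*x + gg (c - M*x).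
Definition KK y := G0 y - G0 (clamp y).
Definition Dt u a b c0 c1 := cost al be M u a b - Phi b c1 + Phi a c0.
Definition jd p c c' := al * jind c c' - (gg (c' - M*p) - gg (c - M*p)).
Definition pd s t c := (KK (c - M*s) - KK (c - M*t)) / M.

Lemma clamp_lo y : y <= -Y -> clamp y = -Y.
Proof. intros. unfold clamp. rewrite Rmin_right by lra. rewrite Rmax_left; lra. Qed.
Lemma clamp_mid y : -Y <= y <= Y -> clamp y = y.
Proof. intros. unfold clamp. rewrite Rmin_right by lra. rewrite Rmax_right; lra. Qed.
Lemma clamp_hi y : Y <= y -> clamp y = Y.
Proof. intros. unfold clamp. rewrite Rmin_left by lra. rewrite Rmax_right; lra. Qed.
Lemma clamp_range y : -Y <= clamp y <= Y.
Proof. destruct (Rle_dec y (-Y)); [rewrite clamp_lo|destruct (Rle_dec y Y); [rewrite clamp_mid|rewrite clamp_hi]]; lra. Qed.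
Lemma clamp_mono y y' : y' <= y -> 0 <= clamp y - clamp y' <= y - y'.
Proof.
  intros H. destruct (Rle_dec y (-Y)); [rewrite (clamp_lo y), (clamp_lo y'); lra|].
  destruct (Rle_dec y Y).
  - rewrite (clamp_mid y) by lra. destruct (Rle_dec y' (-Y)); [rewrite clamp_lo; lra|rewrite clamp_mid; lra].
  - rewrite (clamp_hi y) by lra. destruct (Rle_dec y' (-Y)); [rewrite clamp_lo; lra|].
    destruct (Rle_dec y' Y); [rewrite clamp_mid; lra|rewrite clamp_hi; lra].
Qed.

Lemma G0_diff a b : G0 a - G0 b = (a - b) * (be * ((a^2 + a*b + b^2)/3 - Y^2)).
Proof. unfold G0. field. Qed.

Lemma G0_range z : -Y <= z <= Y -> -(2*be*Y^3/3) <= G0 z <= 2*be*Y^3/3.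
Proof.
  intros Hz. unfold G0. split.
  - assert (0 <= be*(z-Y)^2*(z+2*Y)/3).
    { apply Rmult_le_pos; [|lra]. apply Rmult_le_pos; [apply Rmult_le_pos; [lra|apply pow2_ge_0]|lra]. }
    nra.
  - assert (0 <= be*(z+Y)^2*(2*Y-z)/3).
    { apply Rmult_le_pos; [|lra]. apply Rmult_le_pos; [apply Rmult_le_pos; [lra|apply pow2_ge_0]|lra]. }
    nra.
Qed.

Lemma al_pos : 0 < al.
Proof. rewrite Hal. apply Rdiv_lt_0_compat; [|lra]. apply Rmult_lt_0_compat; [lra|]. apply pow_lt; lra. Qed.

Lemma gg_hi y : Y <= y -> gg y = al/2.
Proof. intros. unfold gg. rewrite clamp_hi by auto. rewrite Hal. unfold G0. field. lra. Qed.
Lemma gg_lo y : y <= -Y -> gg y = -(al/2).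
Proof. intros. unfold gg. rewrite clamp_lo by auto. rewrite Hal. unfold G0. field. lra. Qed.
Lemma gg_mid y : -Y <= y <= Y -> gg y = - G0 y / M.
Proof. intros. unfold gg. rewrite clamp_mid by auto. auto. Qed.

Lemma div_le_M x y : x <= y -> x / M <= y / M.
Proof. intros. unfold Rdiv. apply Rmult_le_compat_r; [left; apply Rinv_0_lt_compat; lra|auto]. Qed.
Lemma div_lt_M x y : x < y -> x / M < y / M.
Proof. intros. unfold Rdiv. apply Rmult_lt_compat_r; [apply Rinv_0_lt_compat; lra|auto]. Qed.
Lemma al2 : al/2 = (2*be*Y^3/3)/M.
Proof. rewrite Hal. field. lra. Qed.

Lemma gg_bounds y : -(al/2) <= gg y <= al/2.
Proof.
  unfold gg. pose proof (G0_range (clamp y) (clamp_range y)). rewrite al2.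
  split.
  - replace (-((2*be*Y^3/3)/M)) with ((-(2*be*Y^3/3))/M) by (field; lra). apply div_le_M; lra.
  - apply div_le_M; lra.
Qed.

Lemma gg_eq_hi y : gg y = al/2 -> Y <= y.
Proof.
  intros H. destruct (Rle_dec Y y); auto. exfalso.
  destruct (Rle_dec y (-Y)).
  - rewrite gg_lo in H by auto. pose proof al_pos. lra.
  - rewrite gg_mid in H by lra. rewrite al2 in H.
    assert (0 < (Y - y)*(Y-y)) by (apply Rmult_lt_0_compat; lra).
    assert (0 < be*((Y - y)*(Y-y))) by (apply Rmult_lt_0_compat; lra).
    assert (- G0 y < 2*be*Y^3/3) by (unfold G0; nra).
    apply div_lt_M in H2. lra.
Qed.

Lemma gg_eq_lo y : gg y = -(al/2) -> y <= -Y.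
Proof.
  intros H. destruct (Rle_dec y (-Y)); auto. exfalso.
  destruct (Rle_dec Y y).
  - rewrite gg_hi in H by auto. pose proof al_pos. lra.
  - rewrite gg_mid in H by lra. rewrite al2 in H.
    assert (0 < (Y + y)*(Y+y)) by (apply Rmult_lt_0_compat; lra).
    assert (0 < be*((Y + y)*(Y+y))) by (apply Rmult_lt_0_compat; lra).
    assert (-(2*be*Y^3/3) < - G0 y) by (unfold G0; nra).
    apply div_lt_M in H2. replace (-(2*be*Y^3/3)/M) with (-((2*be*Y^3/3)/M)) in H2 by (field; lra). lra.
Qed.

Lemma gg_odd y : -Y <= y <= Y -> gg (-y) = - gg y.
Proof. intros. rewrite !gg_mid by lra. unfold G0. field. lra. Qed.

Lemma gg_mono y y' : y' <= y -> gg y' <= gg y.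
Proof.
  intros H. unfold gg. pose proof (clamp_mono y y' H). pose proof (clamp_range y). pose proof (clamp_range y').
  pose proof (G0_diff (clamp y) (clamp y')).
  assert (G0 (clamp y) - G0 (clamp y') <= 0).
  { rewrite H3. apply mul_nn_np; [lra|]. assert (be * ((clamp y ^ 2 + clamp y * clamp y' + clamp y' ^ 2) / 3 - Y ^ 2) <= 0); [|lra].
    apply mul_pos_np; [lra|].
    set (a := clamp y) in *; set (b := clamp y') in *.
    assert (0 <= (Y-a)*(Y+a)) by (apply Rmult_le_pos; lra).
    assert (0 <= (Y-b)*(Y+b)) by (apply Rmult_le_pos; lra).
    assert (0 <= (Y-a)*(Y+b)) by (apply Rmult_le_pos; lra).
    assert (0 <= (Y+a)*(Y-b)) by (apply Rmult_le_pos; lra).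
    nra. }
  replace (- G0 (clamp y') / M) with ((- G0 (clamp y'))/M) by (field; lra).
  replace (- G0 (clamp y) / M) with ((- G0 (clamp y))/M) by (field; lra).
  apply div_le_M. lra.
Qed.

Lemma e_bound Y' : 0 <= Y' <= Y -> al/2 - gg Y' <= be*Y*(Y-Y')^2/M.
Proof.
  intros H. rewrite gg_mid by lra. rewrite al2.
  replace ((2*be*Y^3/3)/M - - G0 Y' / M) with ((2*be*Y^3/3 + G0 Y')/M) by (field; lra).
  apply div_le_M. unfold G0.
  assert (be*(Y-Y')^2*(Y'+2*Y)/3 <= be*Y*(Y-Y')^2).
  { assert (0 <= be*(Y-Y')^2) by (apply Rmult_le_pos; [lra|apply pow2_ge_0]). nra. }
  nra.
Qed.

Lemma KK_mid y : -Y <= y <= Y -> KK y = 0.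
Proof. intros. unfold KK. rewrite clamp_mid by auto. ring. Qed.

Lemma KK_hi y : Y <= y -> KK y = be*(y-Y)^2*(y+2*Y)/3.
Proof. intros. unfold KK. rewrite clamp_hi by auto. unfold G0. field. Qed.
Lemma KK_lo y : y <= -Y -> KK y = be*(y+Y)^2*(y-2*Y)/3.
Proof. intros. unfold KK. rewrite clamp_lo by auto. unfold G0. field. Qed.

Lemma KK_mono y y' : y' <= y -> KK y' <= KK y.
Proof.
  intros H.
  destruct (Rle_dec y (-Y)).
  - rewrite !KK_lo by lra. assert (0 <= be) by lra.
    pose proof (G0_diff y y'). unfold KK in *. 
    assert (0 <= (y - y') * (be * ((y ^ 2 + y * y' + y' ^ 2) / 3 - Y ^ 2))).
    { apply Rmult_le_pos; [lra|]. apply Rmult_le_pos; [lra|]. nra. }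
    unfold G0 in H1. nra.
  - destruct (Rle_dec y Y).
    + rewrite (KK_mid y) by lra. destruct (Rle_dec y' (-Y)).
      * rewrite KK_lo by lra. assert (0 <= be*(y'+Y)^2) by (apply Rmult_le_pos; [lra|apply pow2_ge_0]). nra.
      * rewrite KK_mid by lra. lra.
    + rewrite (KK_hi y) by lra. destruct (Rle_dec y' (-Y)).
      * rewrite KK_lo by lra. assert (0 <= be*(y'+Y)^2) by (apply Rmult_le_pos; [lra|apply pow2_ge_0]).
        assert (0 <= be*(y-Y)^2) by (apply Rmult_le_pos; [lra|apply pow2_ge_0]). nra.
      * destruct (Rle_dec y' Y).
        -- rewrite KK_mid by lra. assert (0 <= be*(y-Y)^2) by (apply Rmult_le_pos; [lra|apply pow2_ge_0]). nra.
        -- rewrite !KK_hi by lra. pose proof (G0_diff y y').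
           assert (0 <= (y - y') * (be * ((y ^ 2 + y * y' + y' ^ 2) / 3 - Y ^ 2))).
           { apply Rmult_le_pos; [lra|]. apply Rmult_le_pos; [lra|]. nra. }
           unfold G0 in H0. nra.
Qed.

Lemma KK_strict y y' : y' < y -> KK y' = KK y -> -Y <= y' /\ y <= Y.
Proof.
  intros H E. split.
  - destruct (Rle_dec (-Y) y'); auto. exfalso.
    destruct (Rle_dec y (-Y)).
    + rewrite !KK_lo in E by lra. pose proof (G0_diff y y').
      assert (0 < (y - y') * (be * ((y ^ 2 + y * y' + y' ^ 2) / 3 - Y ^ 2))).
      { apply Rmult_lt_0_compat; [lra|]. apply Rmult_lt_0_compat; [lra|]. nra. }
      unfold G0 in H0. nra.
    + assert (KK (-Y) <= KK y) by (apply KK_mono; lra). rewrite KK_mid in H0 by lra.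
      rewrite (KK_lo y') in E by lra. assert (0 < (y'+Y)*(y'+Y)) by nra. assert (0 < be*((y'+Y)*(y'+Y))) by (apply Rmult_lt_0_compat; lra).
      nra.
  - destruct (Rle_dec y Y); auto. exfalso.
    destruct (Rle_dec Y y').
    + rewrite !KK_hi in E by lra. pose proof (G0_diff y y').
      assert (0 < (y - y') * (be * ((y ^ 2 + y * y' + y' ^ 2) / 3 - Y ^ 2))).
      { apply Rmult_lt_0_compat; [lra|]. apply Rmult_lt_0_compat; [lra|]. nra. }
      unfold G0 in H0. nra.
    + assert (KK y' <= KK Y) by (apply KK_mono; lra). rewrite (KK_mid Y) in H0 by lra.
      rewrite (KK_hi y) in E by lra. assert (0 < be*((y-Y)*(y-Y))) by (apply Rmult_lt_0_compat; [lra|apply Rmult_lt_0_compat; lra]).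
      nra.
Qed.

Lemma KK_lb_hi eta y y' : 0 < eta -> Y + eta <= y' -> y' <= y -> be*((Y+eta)^2 - Y^2)*(y - y') <= KK y - KK y'.
Proof.
  intros He H1 H2. rewrite !KK_hi by lra. pose proof (G0_diff y y').
  assert (be*((Y+eta)^2 - Y^2)*(y - y') <= (y - y') * (be * ((y ^ 2 + y * y' + y' ^ 2) / 3 - Y ^ 2))).
  { rewrite Rmult_comm. apply Rmult_le_compat_l; [lra|]. apply Rmult_le_compat_l; [lra|]. nra. }
  unfold G0 in H. nra.
Qed.

Lemma KK_lb_lo eta y y' : 0 < eta -> y <= -Y - eta -> y' <= y -> be*((Y+eta)^2 - Y^2)*(y - y') <= KK y - KK y'.
Proof.
  intros He H1 H2. rewrite !KK_lo by lra. pose proof (G0_diff y y').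
  assert (be*((Y+eta)^2 - Y^2)*(y - y') <= (y - y') * (be * ((y ^ 2 + y * y' + y' ^ 2) / 3 - Y ^ 2))).
  { rewrite Rmult_comm. apply Rmult_le_compat_l; [lra|]. apply Rmult_le_compat_l; [lra|]. nra. }
  unfold G0 in H. nra.
Qed.

Lemma KK_upper B y y' : y' <= y -> Rabs y <= B -> Rabs y' <= B -> KK y - KK y' <= be*(B^2+Y^2)*(y - y').
Proof.
  intros H Hy Hy'. unfold KK. apply abs_le in Hy. apply abs_le in Hy'.
  pose proof (G0_diff y y'). pose proof (G0_diff (clamp y) (clamp y')).
  pose proof (clamp_mono y y' H). pose proof (clamp_range y). pose proof (clamp_range y').
  assert ((y - y') * (be * ((y ^ 2 + y * y' + y' ^ 2) / 3 - Y ^ 2)) <= (y-y')*(be*B^2)).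
  { apply Rmult_le_compat_l; [lra|]. apply Rmult_le_compat_l; [lra|]. nra. }
  assert (-((y - y') * (be * Y^2)) <= (clamp y - clamp y') * (be * ((clamp y ^ 2 + clamp y * clamp y' + clamp y' ^ 2) / 3 - Y ^ 2))).
  { assert (0 <= (clamp y ^ 2 + clamp y * clamp y' + clamp y' ^ 2) / 3) by nra.
    assert ((clamp y - clamp y') * (be * Y^2) <= (y - y') * (be * Y^2)).
    { apply Rmult_le_compat_r; [|lra]. apply Rmult_le_pos; [lra|apply pow2_ge_0]. }
    assert (0 <= (clamp y - clamp y') * (be * ((clamp y ^ 2 + clamp y * clamp y' + clamp y' ^ 2) / 3))).
    { apply Rmult_le_pos; [lra|]. apply Rmult_le_pos; lra. }
    nra. }
  nra.
Qed.

Lemma Dt_piece u a b c : a < b -> (forall x, a < x < b -> u x = c) -> Dt u a b c c = pd a b c.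
Proof.
  intros Hab H. unfold Dt. rewrite (cost_const al be M u a b c Hab H).
  unfold Phi, pd, KK, gg, Pc, G0. field. lra.
Qed.

Lemma pd_nonneg a b c : a < b -> 0 <= pd a b c.
Proof.
  intros. unfold pd. apply Rmult_le_pos; [|left; apply Rinv_0_lt_compat; lra].
  assert (KK (c - M*b) <= KK (c - M*a)) by (apply KK_mono; nra). lra.
Qed.

Lemma Dt_split u a p b c0 c1 c c' : a < p < b -> is_step a b u -> trL u p c -> trR u p c' ->
  Dt u a b c0 c1 = Dt u a p c0 c + jd p c c' + Dt u p b c' c1.
Proof.
  intros Hp Hs HL HR. unfold Dt, jd. rewrite (cost_split al be M u a p b c c' Hp Hs HL HR).
  unfold Phi. ring.
Qed.

Lemma jd_nonneg p c c' : 0 <= jd p c c'.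
Proof.
  unfold jd, jind. destruct (Req_EM_T c c') as [->|ne]; [lra|].
  pose proof (gg_bounds (c' - M*p)). pose proof (gg_bounds (c - M*p)). lra.
Qed.

Lemma jd_le p c c' : jd p c c' <= al - (gg (c' - M*p) - gg (c - M*p)).
Proof.
  unfold jd, jind. destruct (Req_EM_T c c') as [->|ne]; [|lra].
  pose proof al_pos. lra.
Qed.

Lemma jd_zero p c c' : jd p c c' = 0 -> c <> c' -> c - M*p <= -Y /\ Y <= c' - M*p.
Proof.
  unfold jd, jind. intros H ne. destruct (Req_EM_T c c') as [->|_]; [tauto|].
  pose proof (gg_bounds (c' - M*p)). pose proof (gg_bounds (c - M*p)).
  split; [apply gg_eq_lo|apply gg_eq_hi]; lra.
Qed.

Lemma Cal u : forall a b, a < b -> is_step a b u ->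
  forall c0 c1, trR u a c0 -> trL u b c1 -> 0 <= Dt u a b c0 c1.
Proof.
  apply (step_ind u (fun a b => forall c0 c1, trR u a c0 -> trL u b c1 -> 0 <= Dt u a b c0 c1)).
  - intros a b c Hab H c0 c1 H0 H1.
    assert (c0 = c) by (apply (trR_unique u a); auto; apply (trR_const a b); auto; lra).
    assert (c1 = c) by (apply (trL_unique u b); auto; apply (trL_const a b); auto; lra).
    subst. rewrite (Dt_piece u a b c Hab H). apply pd_nonneg; auto.
  - intros a p b Hp S1 S2 IH1 IH2 c0 c1 H0 H1.
    destruct (step_trL a p u p S1) as [c Hc]; [lra|].
    destruct (step_trR p b u p S2) as [c' Hc']; [lra|].
    rewrite (Dt_split u a p b c0 c1 c c' Hp (step_glue a p b u Hp S1 S2) Hc Hc').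
    pose proof (IH1 c0 c H0 Hc). pose proof (IH2 c' c1 Hc' H1). pose proof (jd_nonneg p c c'). lra.
Qed.
End Cal.

End MC.
Import MC.

Module MD.
Set Default Proof Using "All".

Lemma G_cost al be M u a b n : a < b -> is_step a b u -> jump_count a b u n ->
  G_with al be (fun x => M * x) a b u n = cost al be M u a b.
Proof. intros. unfold G_with, cost. rewrite (Jn_eq a b u n); auto. Qed.

Lemma trR_same_traces a b u v c : a < b -> same_traces a b u v -> trR v a c -> trR u a c.
Proof.
  intros Hab [[e [He H]] _] [e' [He' H']]. exists (Rmin e e'); split; [apply Rmin_pos; lra|].
  intros x Hx. pose proof (Rmin_l e e'); pose proof (Rmin_r e e'). rewrite H by lra. apply H'; lra.
Qed.
Lemma trL_same_traces a b u v c : a < b -> same_traces a b u v -> trL v b c -> trL u b c.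
Proof.
  intros Hab [_ [e [He H]]] [e' [He' H']]. exists (Rmin e e'); split; [apply Rmin_pos; lra|].
  intros x Hx. pose proof (Rmin_l e e'); pose proof (Rmin_r e e'). rewrite H by lra. apply H'; lra.
Qed.

Section D.
Variables al be M Y : R.
Hypothesis hbe : 0 < be.
Hypothesis hM : 0 < M.
Hypothesis hY : 0 < Y.
Hypothesis Hal : al = 4*be*Y^3/(3*M).

Local Notation Dt := (MC.Dt al be M Y).
Local Notation gg := (MC.gg be M Y).
Local Notation jd := (MC.jd al be M Y).
Local Notation pd := (MC.pd be M Y).
Local Notation Phi := (MC.Phi be M Y).
Local Notation KK := (MC.KK be Y).

Definition GS1 (v : R -> R) := forall p c, (trR v p c \/ trL v p c) -> Rabs (c - M * p) <= Y.
Definition GS2 (v : R -> R) := forall p c c', trL v p c -> trR v p c' -> c <> c' -> c' - c = 2 * Y.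

Lemma ZD v : GS1 v -> GS2 v -> forall a b, a < b -> is_step a b v ->
  forall c0 c1, trR v a c0 -> trL v b c1 -> Dt v a b c0 c1 = 0.
Proof.
  intros G1 G2.
  apply (step_ind v (fun a b => forall c0 c1, trR v a c0 -> trL v b c1 -> Dt v a b c0 c1 = 0)).
  - intros a b c Hab H c0 c1 H0 H1.
    assert (c0 = c) by (apply (trR_unique v a); auto; apply (trR_const a b); auto; lra).
    assert (c1 = c) by (apply (trL_unique v b); auto; apply (trL_const a b); auto; lra).
    subst c0 c1. rewrite (Dt_piece al be M Y hbe hM hY Hal v a b c Hab H).
    pose proof (G1 a c (or_introl H0)). pose proof (G1 b c (or_intror H1)).
    apply abs_le in H2. apply abs_le in H3.
    unfold MC.pd. rewrite !(KK_mid al be M Y hbe hM hY Hal) by lra. unfold Rdiv; ring.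
  - intros a p b Hp S1 S2 IH1 IH2 c0 c1 H0 H1.
    destruct (step_trL a p v p S1) as [c Hc]; [lra|].
    destruct (step_trR p b v p S2) as [c' Hc']; [lra|].
    rewrite (Dt_split al be M Y hbe hM hY Hal v a p b c0 c1 c c' Hp (step_glue a p b v Hp S1 S2) Hc Hc').
    rewrite (IH1 c0 c H0 Hc), (IH2 c' c1 Hc' H1).
    assert (jd p c c' = 0); [|lra].
    unfold MC.jd, jind. destruct (Req_EM_T c c') as [->|ne]; [ring|].
    pose proof (G2 p c c' Hc Hc' ne). pose proof (G1 p c (or_intror Hc)). pose proof (G1 p c' (or_introl Hc')).
    apply abs_le in H2. apply abs_le in H3.
    rewrite (gg_hi al be M Y hbe hM hY Hal) by lra. rewrite (gg_lo al be M Y hbe hM hY Hal) by lra. lra.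
Qed.

Theorem minimizer_of_GS v : S_loc v -> GS1 v -> GS2 v -> entire_local_minimizer al be (fun x => M * x) v.
Proof.
  intros HS G1 G2. split; auto. intros a b Hab. split; [apply HS; auto|].
  intros u Su Htr n m Hn Hm.
  pose proof (HS a b Hab) as Sv.
  rewrite (G_cost al be M v a b n Hab Sv Hn), (G_cost al be M u a b m Hab Su Hm).
  destruct (step_trR a b v a Sv) as [c0 H0]; [lra|].
  destruct (step_trL a b v b Sv) as [c1 H1]; [lra|].
  pose proof (ZD v G1 G2 a b Hab Sv c0 c1 H0 H1).
  pose proof (Cal al be M Y hbe hM hY Hal u a b Hab Su c0 c1 (trR_same_traces a b u v c0 Hab Htr H0) (trL_same_traces a b u v c1 Hab Htr H1)).
  unfold MC.Dt in *. lra.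
Qed.

End D.

End MD.
Import MD.

Module ME.
Set Default Proof Using "All".

Lemma floor_spec x : IZR (floor x) <= x < IZR (floor x) + 1.
Proof. unfold floor. destruct (floor_ex x) as [n Hn]. simpl. auto. Qed.
Lemma floor_eq n x : IZR n <= x < IZR n + 1 -> floor x = n.
Proof.
  intros H. pose proof (floor_spec x).
  assert (IZR (floor x) < IZR (n + 1)) by (rewrite plus_IZR; lra).
  assert (IZR n < IZR (floor x + 1)) by (rewrite plus_IZR; lra).
  apply lt_IZR in H1. apply lt_IZR in H2. lia.
Qed.
Lemma floor_mono x y : x <= y -> (floor x <= floor y)%Z.
Proof.
  intros H. pose proof (floor_spec x). pose proof (floor_spec y).
  assert (IZR (floor x) < IZR (floor y + 1)) by (rewrite plus_IZR; lra).
  apply lt_IZR in H2. lia.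
Qed.

Lemma same_class_trR v w p c : same_class v w -> trR v p c -> trR w p c.
Proof.
  intros Hs [e [He H]]. destruct (Hs (p - 1) (p + 1)) as [l Hl]; [lra|].
  destruct (no_pts_right l p) as [e' [He' H']].
  set (m := Rmin 1 (Rmin e e')). assert (0 < m) by (unfold m; repeat apply Rmin_pos; lra).
  assert (m <= 1) by apply Rmin_l. assert (m <= Rmin e e') by apply Rmin_r.
  assert (Rmin e e' <= e) by apply Rmin_l. assert (Rmin e e' <= e') by apply Rmin_r.
  exists m; split; auto. intros x Hx. rewrite <- Hl; [apply H; lra|lra|].
  intros Hin. apply (H' x Hin). lra.
Qed.
Lemma same_class_trL v w p c : same_class v w -> trL v p c -> trL w p c.
Proof.
  intros Hs [e [He H]]. destruct (Hs (p - 1) (p + 1)) as [l Hl]; [lra|].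
  destruct (no_pts_left l p) as [e' [He' H']].
  set (m := Rmin 1 (Rmin e e')). assert (0 < m) by (unfold m; repeat apply Rmin_pos; lra).
  assert (m <= 1) by apply Rmin_l. assert (m <= Rmin e e') by apply Rmin_r.
  assert (Rmin e e' <= e) by apply Rmin_l. assert (Rmin e e' <= e') by apply Rmin_r.
  exists m; split; auto. intros x Hx. rewrite <- Hl; [apply H; lra|lra|].
  intros Hin. apply (H' x Hin). lra.
Qed.

Lemma trR_bound w M Y p c : 0 < M -> (forall x, Rabs (w x - M * x) <= Y) -> trR w p c -> Rabs (c - M*p) <= Y.
Proof.
  intros hM Hb [e [He H]]. destruct (Rle_dec (Rabs (c - M*p)) Y) as [r|r]; auto. exfalso.
  unfold Rabs in r. destruct (Rcase_abs (c - M * p)).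
  - (* c - Mp < -Y : go right, c - Mx even smaller *)
    pose proof (Hb (p + e/2)). rewrite H in H0 by lra. apply abs_le in H0.
    assert (0 < M * (e/2)) by (apply Rmult_lt_0_compat; lra). lra.
  - set (d := c - M*p - Y). set (x := p + Rmin (e/2) (d/(2*M))).
    assert (0 < d) by (unfold d; lra). assert (0 < d/(2*M)) by (apply Rdiv_lt_0_compat; lra).
    assert (0 < Rmin (e/2) (d/(2*M))) by (apply Rmin_pos; lra).
    assert (Rmin (e/2) (d/(2*M)) <= e/2) by apply Rmin_l.
    assert (Rmin (e/2) (d/(2*M)) <= d/(2*M)) by apply Rmin_r.
    pose proof (Hb x). rewrite H in H5 by (unfold x; lra). apply abs_le in H5.
    assert (M * Rmin (e/2) (d/(2*M)) <= d/2).
    { apply (Rmult_le_compat_l M) in H4; [|lra]. replace (M * (d/(2*M))) with (d/2) in H4 by (field; lra). auto. }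
    unfold x in H5. rewrite Rmult_plus_distr_l in H5. unfold d in *. lra.
Qed.

Lemma trL_bound w M Y p c : 0 < M -> (forall x, Rabs (w x - M * x) <= Y) -> trL w p c -> Rabs (c - M*p) <= Y.
Proof.
  intros hM Hb [e [He H]]. destruct (Rle_dec (Rabs (c - M*p)) Y) as [r|r]; auto. exfalso.
  unfold Rabs in r. destruct (Rcase_abs (c - M * p)).
  - set (d := -(c - M*p) - Y). set (x := p - Rmin (e/2) (d/(2*M))).
    assert (0 < d) by (unfold d; lra). assert (0 < d/(2*M)) by (apply Rdiv_lt_0_compat; lra).
    assert (0 < Rmin (e/2) (d/(2*M))) by (apply Rmin_pos; lra).
    assert (Rmin (e/2) (d/(2*M)) <= e/2) by apply Rmin_l.
    assert (Rmin (e/2) (d/(2*M)) <= d/(2*M)) by apply Rmin_r.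
    pose proof (Hb x). rewrite H in H5 by (unfold x; lra). apply abs_le in H5.
    assert (M * Rmin (e/2) (d/(2*M)) <= d/2).
    { apply (Rmult_le_compat_l M) in H4; [|lra]. replace (M * (d/(2*M))) with (d/2) in H4 by (field; lra). auto. }
    unfold x in H5. rewrite Rmult_minus_distr_l in H5. unfold d in *. lra.
  - pose proof (Hb (p - e/2)). rewrite H in H0 by lra. apply abs_le in H0.
    assert (0 < M * (e/2)) by (apply Rmult_lt_0_compat; lra). lra.
Qed.

Definition ob (H Y tau x : R) := Y * (2 * IZR (floor (((x - H*tau)/H + 1)/2)) + tau).
Definition wv (H tau x : R) := ((x - H*tau)/H + 1)/2.

Section Ob.
Variables M H Y tau : R.
Hypothesis hM : 0 < M.
Hypothesis hH : 0 < H.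
Hypothesis hY : Y = M * H.

Lemma Mx_w x : M * x = Y * (2 * wv H tau x - 1 + tau).
Proof. unfold wv. rewrite hY. field. lra. Qed.

Lemma ob_near x : Rabs (ob H Y tau x - M * x) <= Y.
Proof.
  rewrite Mx_w. unfold ob. fold (wv H tau x). pose proof (floor_spec (wv H tau x)).
  assert (0 < Y) by (rewrite hY; nra).
  apply Rabs_le. split; nra.
Qed.

Lemma ob_mono x y : x <= y -> ob H Y tau x <= ob H Y tau y.
Proof.
  intros Hxy. unfold ob. fold (wv H tau x) (wv H tau y).
  assert (wv H tau x <= wv H tau y).
  { unfold wv. apply Rmult_le_compat_r; [lra|]. apply Rplus_le_compat_r.
    unfold Rdiv. apply Rmult_le_compat_r; [left; apply Rinv_0_lt_compat; lra|lra]. }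
  apply floor_mono, IZR_le in H0. assert (0 < Y) by (rewrite hY; nra). nra.
Qed.

Lemma GS1_ob v : same_class v (ob H Y tau) -> GS1 M Y v.
Proof.
  intros Hs p c [Hc|Hc].
  - apply (trR_bound (ob H Y tau)); auto. apply ob_near. apply (same_class_trR v); auto.
  - apply (trL_bound (ob H Y tau)); auto. apply ob_near. apply (same_class_trL v); auto.
Qed.

Lemma GS2_ob v : same_class v (ob H Y tau) -> GS2 Y v.
Proof.
  intros Hs p c c' Hc Hc' ne.
  pose proof (GS1_ob v Hs p c (or_intror Hc)) as B1. pose proof (GS1_ob v Hs p c' (or_introl Hc')) as B2.
  apply abs_le in B1; apply abs_le in B2.
  apply (same_class_trL v (ob H Y tau)) in Hc; auto. apply (same_class_trR v (ob H Y tau)) in Hc'; auto.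
  destruct Hc as [e [He E]]. destruct Hc' as [e' [He' E']].
  set (d := Rmin e e'). assert (0 < d) by (apply Rmin_pos; lra).
  assert (d <= e) by apply Rmin_l. assert (d <= e') by apply Rmin_r.
  rewrite <- (E (p - d/2)) in * by lra. rewrite <- (E' (p + d/2)) in * by lra.
  pose proof (ob_mono (p - d/2) (p + d/2) ltac:(lra)) as Hmo.
  unfold ob in *. set (n1 := floor (((p - d / 2 - H * tau) / H + 1) / 2)) in *.
  set (n2 := floor (((p + d / 2 - H * tau) / H + 1) / 2)) in *.
  assert (hY0 : 0 < Y) by (rewrite hY; nra).
  assert (K1 : IZR n1 <= IZR n2) by nra.
  assert (K2 : IZR n2 - IZR n1 <= 1) by nra.
  assert (K3 : n1 <> n2) by (intros Heq; apply ne; rewrite Heq; auto).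
  apply le_IZR in K1. rewrite <- minus_IZR in K2. apply le_IZR in K2.
  assert (K4 : n2 = (n1 + 1)%Z) by lia.
  rewrite K4, plus_IZR. ring.
Qed.
End Ob.

End ME.
Import ME.

Module MF.
Set Default Proof Using "All".

Definition regular (v : R -> R) x := exists e, 0 < e /\ forall y, x - e < y < x + e -> v y = v x.

Lemma regular_trR v x : regular v x -> trR v x (v x).
Proof. intros [e [He H]]. exists e; split; auto. intros y Hy; apply H; lra. Qed.
Lemma regular_trL v x : regular v x -> trL v x (v x).
Proof. intros [e [He H]]. exists e; split; auto. intros y Hy; apply H; lra. Qed.

Lemma reg_of_notin a b v l x :
  (forall x y, a < x -> x <= y -> y < b -> (forall z, In z l -> ~ (x <= z <= y)) -> v x = v y) ->
  a < x < b -> ~ In x l -> regular v x.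
Proof.
  intros Hs Hx Hn. destruct (no_pts_both l x) as [e [He H]].
  set (m := Rmin e (Rmin (x - a) (b - x))). assert (0 < m) by (unfold m; repeat apply Rmin_pos; lra).
  assert (m <= e) by apply Rmin_l. assert (m <= Rmin (x-a) (b-x)) by apply Rmin_r.
  assert (Rmin (x-a) (b-x) <= x - a) by apply Rmin_l. assert (Rmin (x-a) (b-x) <= b - x) by apply Rmin_r.
  exists m; split; auto. intros y Hy. destruct (Rle_dec y x).
  - apply Hs; try lra. intros z Hz Hc. destruct (Req_dec z x) as [->|ne]; [tauto|]. apply (H z Hz ne). lra.
  - symmetry; apply Hs; try lra. intros z Hz Hc. destruct (Req_dec z x) as [->|ne]; [tauto|]. apply (H z Hz ne). lra.
Qed.

Lemma exists_regular v : S_loc v -> exists x, regular v x.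
Proof.
  intros HS. destruct (step_trR 0 1 v 0 (HS 0 1 ltac:(lra))) as [c [e [He H]]]; [lra|].
  exists (e/2). exists (e/2); split; [lra|]. intros y Hy. rewrite !H; auto; lra.
Qed.

Lemma same_class_ext v w w' : same_class v w -> (forall x, w x = w' x) -> same_class v w'.
Proof. intros H E a b Hab. destruct (H a b Hab) as [l Hl]. exists l. intros. rewrite <- E. auto. Qed.

Section F.
Variables M H Y : R.
Hypothesis hM : 0 < M.
Hypothesis hH : 0 < H.
Hypothesis hY : Y = M * H.

Lemma coset v : GS2 Y v -> forall a b, a < b -> is_step a b v ->
  forall c0 c1, trR v a c0 -> trL v b c1 -> exists k, c1 - c0 = 2 * Y * IZR k.
Proof.
  intros G2. apply (step_ind v (fun a b => forall c0 c1, trR v a c0 -> trL v b c1 -> exists k, c1 - c0 = 2 * Y * IZR k)).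
  - intros a b c Hab Hc c0 c1 H0 H1.
    assert (c0 = c) by (apply (trR_unique v a); auto; apply (trR_const a b); auto; lra).
    assert (c1 = c) by (apply (trL_unique v b); auto; apply (trL_const a b); auto; lra).
    exists 0%Z. simpl. rewrite H2, H3. ring.
  - intros a p b Hp S1 S2 IH1 IH2 c0 c1 H0 H1.
    destruct (step_trL a p v p S1) as [c Hc]; [lra|].
    destruct (step_trR p b v p S2) as [c' Hc']; [lra|].
    destruct (IH1 c0 c H0 Hc) as [k1 E1]. destruct (IH2 c' c1 Hc' H1) as [k2 E2].
    destruct (Req_dec c c') as [->|ne].
    + exists (k1 + k2)%Z. rewrite plus_IZR. lra.
    + pose proof (G2 p c c' Hc Hc' ne). exists (k1 + k2 + 1)%Z. rewrite !plus_IZR. simpl. lra.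
Qed.

Lemma coset_reg v x y : S_loc v -> GS2 Y v -> regular v x -> regular v y -> exists k, v y - v x = 2 * Y * IZR k.
Proof.
  intros HS G2 Rx Ry. destruct (Rtotal_order x y) as [lt|[eq|gt]].
  - apply (coset v G2 x y lt (HS x y lt)); [apply regular_trR|apply regular_trL]; auto.
  - subst. exists 0%Z. simpl. ring.
  - destruct (coset v G2 y x gt (HS y x gt) (v y) (v x)) as [k Hk]; [apply regular_trR|apply regular_trL|]; auto.
    exists (- k)%Z. rewrite opp_IZR. lra.
Qed.

Theorem ob_of_GS v : S_loc v -> GS1 M Y v -> GS2 Y v -> exists tau, -1 <= tau <= 1 /\ same_class v (ob H Y tau).
Proof.
  intros HS G1 G2. assert (hY0 : 0 < Y) by (rewrite hY; nra).
  destruct (exists_regular v HS) as [x0 R0].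
  set (cs := v x0). set (k0 := floor ((cs / Y + 1) / 2)).
  pose proof (floor_spec ((cs / Y + 1) / 2)) as Fk0. fold k0 in Fk0.
  set (tau := cs / Y - 2 * IZR k0).
  assert (Htau : -1 <= tau <= 1) by (unfold tau; lra).
  exists tau; split; auto.
  assert (Main : forall x, regular v x -> v x = ob H Y tau x).
  { intros x Rx. destruct Rx as [e [He Ex]].
    set (n := floor (wv H tau x)). pose proof (floor_spec (wv H tau x)) as Fn. fold n in Fn.
    set (delta := Rmin (e/2) (H * (IZR n + 1 - wv H tau x))).
    assert (0 < H * (IZR n + 1 - wv H tau x)) by (apply Rmult_lt_0_compat; lra).
    assert (Hd0 : 0 < delta) by (apply Rmin_pos; lra).
    assert (Hd1 : delta <= e/2) by apply Rmin_l.
    assert (Hd2 : delta <= H * (IZR n + 1 - wv H tau x)) by apply Rmin_r.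
    set (y := x + delta).
    assert (Vy : v y = v x) by (apply Ex; unfold y; lra).
    assert (Ry : regular v y).
    { exists (e/2); split; [lra|]. intros z Hz. rewrite Vy. apply Ex. unfold y in Hz; lra. }
    assert (Wy : wv H tau y = wv H tau x + delta / (2*H)) by (unfold wv, y; field; lra).
    assert (Wy2 : delta / (2*H) <= (IZR n + 1 - wv H tau x)/2).
    { apply (Rmult_le_reg_l (2*H)); [lra|]. replace (2*H*(delta/(2*H))) with delta by (field; lra). lra. }
    assert (Wy3 : 0 < delta / (2*H)) by (apply Rdiv_lt_0_compat; lra).
    assert (Fy : floor (wv H tau y) = n) by (apply floor_eq; lra).
    assert (Oy : ob H Y tau y = ob H Y tau x).
    { unfold ob. fold (wv H tau y) (wv H tau x). rewrite Fy. fold n. auto. }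
    destruct (coset_reg v x0 y HS G2 R0 Ry) as [k Hk].
    pose proof (G1 y (v y) (or_introl (regular_trR v y Ry))) as By. apply abs_le in By.
    pose proof (Mx_w M H Y tau hM hH hY y) as My.
    assert (Oy2 : ob H Y tau y = Y * (2 * IZR n + tau)) by (unfold ob; fold (wv H tau y); rewrite Fy; ring).
    assert (Vy2 : v y = Y * tau + 2 * Y * (IZR k0 + IZR k)).
    { unfold tau. replace (v y) with (cs + (v y - v x0)) by (unfold cs; ring). rewrite Hk. field. lra. }
    assert (Dif : v y - ob H Y tau y = 2 * Y * IZR (k0 + k - n)).
    { rewrite Vy2, Oy2, minus_IZR, plus_IZR. ring. }
    assert (Lt : Rabs (IZR (k0 + k - n)) < 1).
    { apply Rabs_def1.
      - apply (Rmult_lt_reg_l (2*Y)); [lra|]. rewrite <- Dif. rewrite Oy2. rewrite My in By. nra.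
      - apply (Rmult_lt_reg_l (2*Y)); [lra|]. replace (2 * Y * - (1)) with (-(2*Y)) by ring. rewrite <- Dif. rewrite Oy2. rewrite My in By. nra. }
    assert (Z0 : (k0 + k - n)%Z = 0%Z).
    { apply Rabs_def2 in Lt. destruct Lt as [L1 L2]. apply lt_IZR in L1. replace (-(1)) with (IZR (-1)) in L2 by (simpl; ring). apply lt_IZR in L2. lia. }
    rewrite Z0 in Dif. simpl in Dif. rewrite <- Vy, <- Oy. lra. }
  intros a b Hab. destruct (HS a b Hab) as [l [Hl Hs]]. exists l. intros x Hx Hn.
  apply Main. apply (reg_of_notin a b v l x Hs Hx Hn).
Qed.
End F.

Lemma Hpar_pos al be M : 0 < Hpar al be M.
Proof. unfold Hpar, Rpower. pose proof (exp_pos (/3 * ln (6 * al / (be * M ^ 2)))). lra. Qed.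

Lemma Hpar_cube al be M : 0 < al -> 0 < be -> M <> 0 -> (Hpar al be M)^3 = 6 * al / (be * M^2) / 8.
Proof.
  intros ha hb hM. unfold Hpar.
  assert (0 < M*M) by (destruct (Rlt_dec 0 M); [nra| assert (M < 0) by lra; nra]).
  assert (Hx : 0 < 6 * al / (be * M ^ 2)).
  { apply Rdiv_lt_0_compat; [lra|]. apply Rmult_lt_0_compat; auto. simpl; lra. }
  set (x := 6 * al / (be * M ^ 2)) in *.
  assert (P : 0 < Rpower x (/3)) by (unfold Rpower; apply exp_pos).
  assert (E : (Rpower x (/3))^3 = x).
  { rewrite <- (Rpower_pow 3 _ P). rewrite Rpower_mult.
    replace (/3 * INR 3) with 1 by (simpl; field). apply Rpower_1; auto. }
  replace ((/ 2 * Rpower x (/ 3)) ^ 3) with (/8 * (Rpower x (/3))^3) by (simpl; field).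
  rewrite E. field.
Qed.

Lemma Vpar_alpha al be M : 0 < al -> 0 < be -> M <> 0 ->
  al = 4 * be * (Vpar al be M)^3 / (3 * M).
Proof.
  intros ha hb hM. unfold Vpar. rewrite Rpow_mult_distr, Hpar_cube by auto.
  field. split; auto; lra.
Qed.

Lemma oblique_ob al be M tau x : M <> 0 ->
  oblique al be M tau x = ob (Hpar al be M) (Vpar al be M) tau x.
Proof.
  intros hM. unfold oblique. destruct (Req_EM_T M 0) as [e|_]; [tauto|].
  unfold stairHV, stair, ob. replace ((x - Hpar al be M * tau) / Hpar al be M) with ((x - Hpar al be M * tau) / Hpar al be M) by reflexivity.
  ring.
Qed.

End MF.
Import MF.

Module MG1.
Set Default Proof Using "All".

Section G1.
Variables al be M Y : R.
Hypothesis hbe : 0 < be.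
Hypothesis hM : 0 < M.
Hypothesis hY : 0 < Y.
Hypothesis Hal : al = 4*be*Y^3/(3*M).

Local Notation Dt := (MC.Dt al be M Y).
Local Notation gg := (MC.gg be M Y).
Local Notation jd := (MC.jd al be M Y).
Local Notation pd := (MC.pd be M Y).
Local Notation KK := (MC.KK be Y).

Variables c0 c1 p1 l : R.
Variable m : nat.
Hypothesis hl : 0 < l.
Hypothesis hlY : M * l / 2 <= Y.
Let pN := p1 + INR (S m) * l.

Definition comp (x : R) : R :=
  if Rlt_dec x p1 then c0 else if Rlt_dec x pN then M * (p1 + l * (IZR (floor ((x - p1)/l)) + /2)) else c1.

Definition mval (j : nat) := M * (p1 + l * (INR j + /2)).

Lemma comp_mid j : (j <= m)%nat -> forall x, p1 + INR j * l < x < p1 + INR (S j) * l -> comp x = mval j.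
Proof.
  intros Hj x Hx. unfold comp, mval.
  assert (INR j >= 0) by (apply Rle_ge, pos_INR).
  assert (INR (S j) <= INR (S m)) by (apply le_INR; lia).
  repeat rewrite S_INR in *.
  assert ((INR j + 1) * l <= (INR m + 1) * l) by (apply Rmult_le_compat_r; lra).
  assert (0 <= INR j * l) by (apply Rmult_le_pos; lra).
  destruct (Rlt_dec x p1); [lra|]. destruct (Rlt_dec x pN) as [_|n0]; [|unfold pN in n0; rewrite S_INR in n0; lra].
  assert (floor ((x - p1)/l) = Z.of_nat j).
  { apply floor_eq. rewrite <- INR_IZR_INZ. split.
    - apply (Rmult_le_reg_r l); auto. unfold Rdiv. rewrite Rmult_assoc, Rinv_l, Rmult_1_r by lra. lra.
    - apply (Rmult_lt_reg_r l); auto. unfold Rdiv. rewrite Rmult_assoc, Rinv_l, Rmult_1_r by lra. lra. }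
  rewrite H3, <- INR_IZR_INZ. reflexivity.
Qed.

Let JM := al - (gg (M*l/2) - gg (-(M*l/2))).

Lemma piece_zero j : (j <= m)%nat -> Dt comp (p1 + INR j * l) (p1 + INR (S j) * l) (mval j) (mval j) = 0.
Proof.
  intros Hj. rewrite (Dt_piece al be M Y hbe hM hY Hal comp _ _ (mval j)).
  - unfold MC.pd. unfold mval. rewrite S_INR.
    rewrite !(KK_mid al be M Y hbe hM hY Hal).
    + unfold Rdiv; ring.
    + split; nra.
    + split; nra.
  - rewrite S_INR. lra.
  - apply comp_mid; auto.
Qed.

Lemma trL_mid j : (j <= m)%nat -> trL comp (p1 + INR (S j) * l) (mval j).
Proof.
  intros Hj. apply (trL_const (p1 + INR j * l) (p1 + INR (S j) * l)). apply comp_mid; auto. rewrite S_INR; lra.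
Qed.
Lemma trR_mid j : (j <= m)%nat -> trR comp (p1 + INR j * l) (mval j).
Proof.
  intros Hj. apply (trR_const (p1 + INR j * l) (p1 + INR (S j) * l)). apply comp_mid; auto. rewrite S_INR; lra.
Qed.

Lemma mid_Dt : forall k, (k <= m)%nat ->
  is_step p1 (p1 + INR (S k) * l) comp /\ Dt comp p1 (p1 + INR (S k) * l) (mval 0) (mval k) = INR k * JM.
Proof.
  induction k as [|k IH]; intros Hk.
  - split.
    + apply (step_const _ _ _ (mval 0%nat)). intros x Hx. apply comp_mid; [lia|]. simpl INR in *. lra.
    + simpl INR. replace (p1 + 0 * l) with p1 in * by ring. pose proof (piece_zero 0 ltac:(lia)).
      simpl INR in H. replace (p1 + 0 * l) with p1 in H by ring. rewrite H. ring.
  - destruct (IH ltac:(lia)) as [S1 E1].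
    assert (Hq : p1 < p1 + INR (S k) * l < p1 + INR (S (S k)) * l).
    { rewrite !S_INR. pose proof (pos_INR k). nra. }
    assert (S2 : is_step (p1 + INR (S k) * l) (p1 + INR (S (S k)) * l) comp).
    { apply (step_const (p1 + INR (S k) * l) (p1 + INR (S (S k)) * l) _ (mval (S k))). apply comp_mid; auto. }
    split; [apply (step_glue _ (p1 + INR (S k) * l)); auto|].
    rewrite (Dt_split al be M Y hbe hM hY Hal comp _ (p1 + INR (S k) * l) _ _ _ (mval k) (mval (S k))); auto.
    + rewrite E1. rewrite piece_zero by auto.
      assert (jd (p1 + INR (S k) * l) (mval k) (mval (S k)) = JM).
      { unfold MC.jd, JM, jind. destruct (Req_EM_T (mval k) (mval (S k))) as [e|ne].
        - exfalso. unfold mval in e. rewrite S_INR in e. nra.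
        - unfold mval. rewrite !S_INR. f_equal; [ring|]. f_equal; f_equal; field. }
      rewrite H, S_INR. ring.
    + apply (step_glue _ (p1 + INR (S k) * l)); auto.
    + apply trL_mid; lia.
    + apply trR_mid; auto.
Qed.

Variables a b : R.
Hypothesis ha : a < p1.
Hypothesis hb : pN < b.

Lemma comp_step : is_step a b comp.
Proof.
  assert (HpN : p1 < pN) by (unfold pN; rewrite S_INR; pose proof (pos_INR m); nra).
  apply (step_glue _ p1); [lra| |apply (step_glue _ pN); [lra| |]].
  - apply (step_const _ _ _ c0). intros x Hx. unfold comp. destruct (Rlt_dec x p1); auto; lra.
  - apply (mid_Dt m); auto.
  - apply (step_const _ _ _ c1). intros x Hx. unfold comp. destruct (Rlt_dec x p1); [lra|]. destruct (Rlt_dec x pN); auto; lra.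
Qed.

Lemma comp_trR : trR comp a c0.
Proof. apply (trR_const a p1); [|lra]. intros x Hx. unfold comp. destruct (Rlt_dec x p1); auto; lra. Qed.
Lemma comp_trL : trL comp b c1.
Proof.
  assert (HpN : p1 < pN) by (unfold pN; rewrite S_INR; pose proof (pos_INR m); nra).
  apply (trL_const pN b); [|lra]. intros x Hx. unfold comp. destruct (Rlt_dec x p1); [lra|]. destruct (Rlt_dec x pN); auto; lra.
Qed.

Lemma comp_Dt : Dt comp a b c0 c1 =
  pd a p1 c0 + jd p1 c0 (mval 0) + INR m * JM + jd pN (mval m) c1 + pd pN b c1.
Proof.
  assert (HpN : p1 < pN) by (unfold pN; rewrite S_INR; pose proof (pos_INR m); nra).
  assert (C1 : forall x, a < x < p1 -> comp x = c0) by (intros x Hx; unfold comp; destruct (Rlt_dec x p1); auto; lra).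
  assert (C2 : forall x, pN < x < b -> comp x = c1)
    by (intros x Hx; unfold comp; destruct (Rlt_dec x p1); [lra|]; destruct (Rlt_dec x pN); auto; lra).
  destruct (mid_Dt m (le_n m)) as [SM EM].
  assert (S3 : is_step pN b comp) by (apply (step_const _ _ _ c1); auto).
  rewrite (Dt_split al be M Y hbe hM hY Hal comp a p1 b c0 c1 c0 (mval 0)); [| lra | apply comp_step
      | apply (trL_const a p1); auto; lra | replace p1 with (p1 + INR 0 * l) at 1 by (simpl; ring); apply trR_mid; lia].
  rewrite (Dt_split al be M Y hbe hM hY Hal comp p1 pN b (mval 0) c1 (mval m) c1); [| lra | apply (step_glue _ pN); auto; lra
      | apply trL_mid; auto | apply (trR_const pN b); auto; lra].
  rewrite (Dt_piece al be M Y hbe hM hY Hal comp a p1 c0); auto.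
  rewrite (Dt_piece al be M Y hbe hM hY Hal comp pN b c1); auto.
  unfold pN in *. rewrite EM. ring.
Qed.
End G1.

End MG1.
Import MG1.

Module MG2.
Set Default Proof Using "All".

Section G2.
Variables al be M Y : R.
Hypothesis hbe : 0 < be.
Hypothesis hM : 0 < M.
Hypothesis hY : 0 < Y.
Hypothesis Hal : al = 4*be*Y^3/(3*M).

Local Notation Dt := (MC.Dt al be M Y).
Local Notation gg := (MC.gg be M Y).
Local Notation jd := (MC.jd al be M Y).
Local Notation pd := (MC.pd be M Y).
Local Notation KK := (MC.KK be Y).

Let ggb := gg_bounds al be M Y hbe hM hY Hal.

Lemma comp_bound a b c0 c1 p1 l m :
  0 < l -> M * l / 2 <= Y -> a < p1 -> p1 + INR (S m) * l < b ->
  exists u, is_step a b u /\ trR u a c0 /\ trL u b c1 /\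
   Dt u a b c0 c1 <= pd a p1 c0 + pd (p1 + INR (S m) * l) b c1 + (al/2 + gg (c0 - M * p1))
     + (al/2 - gg (c1 - M * (p1 + INR (S m) * l))) + 2 * INR (S m) * (be * Y * (Y - M*l/2)^2 / M).
Proof.
  intros hl hlY ha hb. exists (MG1.comp M c0 c1 p1 l m).
  split; [apply (comp_step al be M Y hbe hM hY Hal c0 c1 p1 l m hl hlY a b ha hb)|].
  split; [apply (comp_trR al be M Y hbe hM hY Hal c0 c1 p1 l m hl hlY a b ha hb)|].
  split; [apply (comp_trL al be M Y hbe hM hY Hal c0 c1 p1 l m hl hlY a b ha hb)|].
  rewrite (comp_Dt al be M Y hbe hM hY Hal c0 c1 p1 l m hl hlY a b ha hb).
  set (pN := p1 + INR (S m) * l).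
  pose proof (jd_le al be M Y hbe hM hY Hal p1 c0 (mval M p1 l 0)) as J1.
  pose proof (jd_le al be M Y hbe hM hY Hal pN (mval M p1 l m) c1) as J2.
  assert (E1 : mval M p1 l 0 - M * p1 = M * l / 2) by (unfold mval; simpl; field).
  assert (E2 : mval M p1 l m - M * pN = - (M * l / 2)) by (unfold mval, pN; rewrite S_INR; field).
  rewrite E1 in J1. rewrite E2 in J2.
  assert (Y'0 : 0 <= M * l / 2 <= Y) by (split; [nra|lra]).
  rewrite (gg_odd al be M Y hbe hM hY Hal) in J2 by lra.
  rewrite (gg_odd al be M Y hbe hM hY Hal) by lra.
  pose proof (e_bound al be M Y hbe hM hY Hal (M*l/2) Y'0) as EB.
  rewrite S_INR. pose proof (pos_INR m).
  assert (0 <= INR m * (al / 2 - gg (M * l / 2))).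
  { apply Rmult_le_pos; auto. pose proof (ggb (M*l/2)). lra. }
  assert (INR m * (al / 2 - gg (M * l / 2)) <= INR m * (be * Y * (Y - M * l / 2) ^ 2 / M)) by (apply Rmult_le_compat_l; lra).
  unfold MC.jd in *. lra.
Qed.

Lemma pd_small_left a c0 t : 0 < t -> exists e0, 0 < e0 /\ forall e, 0 < e <= e0 -> pd a (a + e) c0 <= t.
Proof.
  intros ht. set (B := Rabs (c0 - M*a) + M).
  set (K := be * (B^2 + Y^2)). assert (0 < K) by (unfold K; apply Rmult_lt_0_compat; [lra|]; pose proof (pow2_ge_0 B); pose proof (pow2_gt_0 Y); nra).
  exists (Rmin 1 (t / K)). split; [apply Rmin_pos; [lra|apply Rdiv_lt_0_compat; lra]|].
  intros e He. assert (e <= 1) by (pose proof (Rmin_l 1 (t/K)); lra). assert (e <= t/K) by (pose proof (Rmin_r 1 (t/K)); lra).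
  assert (Me : M * e <= M) by (pose proof (Rmult_le_compat_l M e 1 ltac:(lra) ltac:(lra)); lra).
  unfold MC.pd. pose proof (KK_upper al be M Y hbe hM hY Hal B (c0 - M*a) (c0 - M*(a+e))) as KU.
  assert (Rabs (c0 - M*a) <= B) by (unfold B; lra).
  assert (Rabs (c0 - M*(a+e)) <= B).
  { unfold B. replace (c0 - M*(a+e)) with ((c0 - M*a) + (-(M*e))) by ring.
    eapply Rle_trans; [apply Rabs_triang|]. rewrite Rabs_Ropp, (Rabs_right (M*e)) by nra. lra. }
  specialize (KU ltac:(nra) H2 H3). fold K in KU.
  replace (c0 - M * a - (c0 - M * (a + e))) with (M*e) in KU by ring.
  apply (Rmult_le_reg_r M); auto. unfold Rdiv. rewrite Rmult_assoc, Rinv_l, Rmult_1_r by lra.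
  assert (K * e <= t) by (apply (Rmult_le_compat_l K) in H1; [|lra]; replace (K*(t/K)) with t in H1 by (field; lra); lra).
  nra.
Qed.

Lemma pd_small_right b c1 t : 0 < t -> exists e0, 0 < e0 /\ forall e, 0 < e <= e0 -> pd (b - e) b c1 <= t.
Proof.
  intros ht. set (B := Rabs (c1 - M*b) + M).
  set (K := be * (B^2 + Y^2)). assert (0 < K) by (unfold K; apply Rmult_lt_0_compat; [lra|]; pose proof (pow2_ge_0 B); pose proof (pow2_gt_0 Y); nra).
  exists (Rmin 1 (t / K)). split; [apply Rmin_pos; [lra|apply Rdiv_lt_0_compat; lra]|].
  intros e He. assert (e <= 1) by (pose proof (Rmin_l 1 (t/K)); lra). assert (e <= t/K) by (pose proof (Rmin_r 1 (t/K)); lra).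
  assert (Me : M * e <= M) by (pose proof (Rmult_le_compat_l M e 1 ltac:(lra) ltac:(lra)); lra).
  unfold MC.pd. pose proof (KK_upper al be M Y hbe hM hY Hal B (c1 - M*(b-e)) (c1 - M*b)) as KU.
  assert (Rabs (c1 - M*b) <= B) by (unfold B; lra).
  assert (Rabs (c1 - M*(b-e)) <= B).
  { unfold B. replace (c1 - M*(b-e)) with ((c1 - M*b) + (M*e)) by ring.
    eapply Rle_trans; [apply Rabs_triang|]. rewrite (Rabs_right (M*e)) by nra. lra. }
  specialize (KU ltac:(nra) H3 H2). fold K in KU.
  replace (c1 - M * (b - e) - (c1 - M * b)) with (M*e) in KU by ring.
  apply (Rmult_le_reg_r M); auto. unfold Rdiv. rewrite Rmult_assoc, Rinv_l, Rmult_1_r by lra.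
  assert (K * e <= t) by (apply (Rmult_le_compat_l K) in H1; [|lra]; replace (K*(t/K)) with t in H1 by (field; lra); lra).
  nra.
Qed.

Lemma choose_n D : 0 < D -> exists m : nat,
  M * (D / INR (S m)) / 2 <= Y /\
  2 * INR (S m) * (be * Y * (Y - M * (D / INR (S m)) / 2)^2 / M) <= 2 * be * Y^3 / (M * INR (S m)) /\
  D * M / (2 * Y) <= INR (S m).
Proof.
  intros HD. set (z := D * M / (2*Y)). assert (Hz : 0 < z) by (unfold z; apply Rdiv_lt_0_compat; nra).
  pose proof (floor_spec z) as Fz.
  assert (F0 : (0 <= floor z)%Z).
  { assert (IZR (-1) < IZR (floor z)) by (simpl; lra). apply lt_IZR in H. lia. }
  exists (Z.to_nat (floor z)).
  assert (Em : INR (Z.to_nat (floor z)) = IZR (floor z)) by (rewrite INR_IZR_INZ, Z2Nat.id; auto).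
  rewrite S_INR, Em. set (n := IZR (floor z) + 1).
  assert (Hn : z < n /\ n <= z + 1) by (unfold n; lra).
  assert (0 < n) by lra.
  assert (E : M * (D / n) / 2 = Y * (z / n)) by (unfold z; field; split; lra).
  rewrite E.
  assert (z / n <= 1) by (apply (Rmult_le_reg_r n); [lra|]; unfold Rdiv; rewrite Rmult_assoc, Rinv_l, Rmult_1_r by lra; lra).
  assert (0 < z / n) by (apply Rdiv_lt_0_compat; lra).
  split; [nra|split].
  - assert (Y - Y * (z/n) = Y * ((n - z)/n)) by (field; lra). rewrite H2.
    assert (0 <= (n - z)/n <= 1/n).
    { split; [apply Rdiv_le_0_compat; lra|]. unfold Rdiv. apply Rmult_le_compat_r; [left; apply Rinv_0_lt_compat; lra|lra]. }
    assert (((n-z)/n)^2 <= (1/n)^2) by (apply pow_incr; lra).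
    replace (2 * n * (be * Y * (Y * ((n - z) / n)) ^ 2 / M)) with (2*be*Y^3/M * (n * ((n-z)/n)^2)) by (field; lra).
    replace (2 * be * Y ^ 3 / (M * n)) with (2*be*Y^3/M * (n * (1/n)^2)) by (field; lra).
    apply Rmult_le_compat_l; [apply Rdiv_le_0_compat; [apply Rmult_le_pos; [lra|apply pow_le; lra]|lra]|].
    apply Rmult_le_compat_l; lra.
  - lra.
Qed.
End G2.

End MG2.
Import MG2.

Module MG3.
Set Default Proof Using "All".

Section G3.
Variables al be M Y : R.
Hypothesis hbe : 0 < be.
Hypothesis hM : 0 < M.
Hypothesis hY : 0 < Y.
Hypothesis Hal : al = 4*be*Y^3/(3*M).

Local Notation Dt := (MC.Dt al be M Y).
Local Notation gg := (MC.gg be M Y).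
Local Notation jd := (MC.jd al be M Y).
Local Notation pd := (MC.pd be M Y).
Local Notation KK := (MC.KK be Y).

Let ggb := gg_bounds al be M Y hbe hM hY Hal.

Lemma mid_le n : 1 <= n -> 2 * be * Y^3 / (M * n) <= 3/2 * al.
Proof.
  intros Hn. rewrite Hal. replace (3/2 * (4 * be * Y ^ 3 / (3 * M))) with (2*be*Y^3/M) by (field; lra).
  assert (0 < 2*be*Y^3) by (pose proof (pow_lt Y 3 hY); nra).
  replace (2*be*Y^3/(M*n)) with ((2*be*Y^3/M) * (/n)) by (field; lra).
  assert (/n <= 1) by (rewrite <- Rinv_1; apply Rinv_le_contravar; lra).
  assert (0 < 2*be*Y^3/M) by (apply Rdiv_lt_0_compat; lra).
  nra.
Qed.

Lemma Dt_bounded a b c0 c1 : a < b -> exists u, is_step a b u /\ trR u a c0 /\ trL u b c1 /\ Dt u a b c0 c1 <= 1 + 4 * al.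
Proof.
  intros Hab.
  destruct (pd_small_left al be M Y hbe hM hY Hal a c0 (1/2) ltac:(lra)) as [e1 [He1 P1]].
  destruct (pd_small_right al be M Y hbe hM hY Hal b c1 (1/2) ltac:(lra)) as [e2 [He2 P2]].
  set (f1 := Rmin e1 ((b-a)/3)). set (f2 := Rmin e2 ((b-a)/3)).
  assert (0 < f1) by (apply Rmin_pos; lra). assert (0 < f2) by (apply Rmin_pos; lra).
  assert (f1 <= e1) by apply Rmin_l. assert (f1 <= (b-a)/3) by apply Rmin_r.
  assert (f2 <= e2) by apply Rmin_l. assert (f2 <= (b-a)/3) by apply Rmin_r.
  set (p1 := a + f1). set (q := b - f2). set (D := q - p1).
  assert (HD : 0 < D) by (unfold D, q, p1; lra).
  destruct (choose_n al be M Y hbe hM hY Hal D HD) as [m [C1 [C2 C3]]].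
  pose proof (pos_INR m) as Pm. assert (Pn : 0 < INR (S m)) by (rewrite S_INR; lra).
  set (l := D / INR (S m)). assert (hl : 0 < l) by (apply Rdiv_lt_0_compat; lra).
  assert (Eq : p1 + INR (S m) * l = q) by (unfold l, D; field; lra).
  destruct (comp_bound al be M Y hbe hM hY Hal a b c0 c1 p1 l m hl C1 ltac:(unfold p1; lra) ltac:(rewrite Eq; unfold q; lra))
    as [u [Su [T1 [T2 B]]]].
  exists u; repeat split; auto. rewrite Eq in B. fold l in C2.
  pose proof (P1 f1 ltac:(lra)). pose proof (P2 f2 ltac:(lra)).
  pose proof (ggb (c0 - M*p1)). pose proof (ggb (c1 - M*q)).
  pose proof (mid_le (INR (S m)) ltac:(rewrite S_INR; lra)).
  unfold p1, q in *. lra.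
Qed.

Lemma eta_choice d : 0 < d -> exists eta, 0 < eta /\ KK (Y + eta) / M <= d.
Proof.
  intros Hd. set (eta := Rmin Y (3 * d * M / (16 * be * Y^2))).
  assert (0 < Y^2) by (apply pow_lt; lra).
  assert (0 < 3 * d * M) by (apply Rmult_lt_0_compat; lra).
  assert (0 < 16 * be * Y^2) by (apply Rmult_lt_0_compat; lra).
  assert (0 < eta) by (apply Rmin_pos; [lra|apply Rdiv_lt_0_compat; lra]).
  assert (eta <= Y) by apply Rmin_l. assert (eta <= 3 * d * M / (16 * be * Y^2)) by apply Rmin_r.
  exists eta; split; auto.
  rewrite (KK_hi al be M Y hbe hM hY Hal) by lra. replace (Y + eta - Y) with eta by ring.
  apply (Rmult_le_reg_r M); auto. unfold Rdiv at 1. rewrite Rmult_assoc, Rinv_l, Rmult_1_r by lra.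
  assert (be * eta ^ 2 * (Y + eta + 2 * Y) / 3 <= 4/3 * be * Y^2 * eta).
  { assert (eta^2 <= Y * eta) by (simpl; nra). assert (0 <= be * eta^2) by (apply Rmult_le_pos; [lra|apply pow2_ge_0]).
    assert (be * eta^2 * (Y + eta + 2*Y) <= be * eta^2 * (4 * Y)) by (apply Rmult_le_compat_l; lra).
    assert (be * eta^2 <= be * (Y * eta)) by (apply Rmult_le_compat_l; lra).
    assert (be * eta^2 * (4*Y) <= be * (Y*eta) * (4*Y)) by (apply Rmult_le_compat_r; lra).
    replace (4/3 * be * Y^2 * eta) with (be * (Y*eta) * (4*Y) / 3) by (simpl; field). lra. }
  assert (4/3 * be * Y^2 * eta <= 4/3 * be * Y^2 * (3 * d * M / (16 * be * Y^2))).
  { apply Rmult_le_compat_l; auto. nra. }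
  replace (4/3 * be * Y^2 * (3 * d * M / (16 * be * Y^2))) with (d * M / 4) in H6 by (field; lra).
  nra.
Qed.


Lemma KK_neg eta : 0 < eta -> KK (- Y - eta) = - KK (Y + eta).
Proof.
  intros. rewrite (KK_lo al be M Y hbe hM hY Hal) by lra. rewrite (KK_hi al be M Y hbe hM hY Hal) by lra. field.
Qed.

Lemma left_point a c0 eta d : 0 < eta -> 0 < d -> KK (Y + eta) / M <= d -> c0 - M * a <= Y + eta ->
  exists p1, a < p1 <= a + (1 + (2*Y + eta)/M) /\ gg (c0 - M * p1) = -(al/2) /\ pd a p1 c0 <= d.
Proof.
  intros He Hd HK Hc. assert (0 < (2*Y+eta)/M) by (apply Rdiv_lt_0_compat; lra).
  destruct (Rle_dec (c0 - M*a) (-Y)).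
  - destruct (pd_small_left al be M Y hbe hM hY Hal a c0 d Hd) as [e0 [He0 P]].
    set (f := Rmin e0 1). assert (0 < f) by (apply Rmin_pos; lra).
    assert (f <= e0) by apply Rmin_l. assert (f <= 1) by apply Rmin_r.
    exists (a + f); split; [lra|split; [|apply P; lra]].
    apply (gg_lo al be M Y hbe hM hY Hal). assert (0 < M * f) by (apply Rmult_lt_0_compat; lra). nra.
  - set (p1 := a + (c0 - M*a + Y)/M).
    assert (0 < (c0 - M*a + Y)/M) by (apply Rdiv_lt_0_compat; lra).
    assert ((c0 - M*a + Y)/M <= (2*Y+eta)/M) by (apply (div_le_M al be M Y hbe hM hY Hal); lra).
    assert (E : c0 - M * p1 = -Y) by (unfold p1; field; lra).
    exists p1; split; [unfold p1; lra|]. rewrite E. split; [apply (gg_lo al be M Y hbe hM hY Hal); lra|].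
    unfold MC.pd. rewrite E, (KK_mid al be M Y hbe hM hY Hal (-Y)) by lra. rewrite Rminus_0_r.
    apply Rle_trans with (KK (Y + eta) / M); auto. apply (div_le_M al be M Y hbe hM hY Hal).
    apply (KK_mono al be M Y hbe hM hY Hal); auto.
Qed.

Lemma right_point b c1 eta d : 0 < eta -> 0 < d -> KK (Y + eta) / M <= d -> - Y - eta <= c1 - M * b ->
  exists q, b - (1 + (2*Y + eta)/M) <= q < b /\ gg (c1 - M * q) = al/2 /\ pd q b c1 <= d.
Proof.
  intros He Hd HK Hc. assert (0 < (2*Y+eta)/M) by (apply Rdiv_lt_0_compat; lra).
  destruct (Rle_dec Y (c1 - M*b)).
  - destruct (pd_small_right al be M Y hbe hM hY Hal b c1 d Hd) as [e0 [He0 P]].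
    set (f := Rmin e0 1). assert (0 < f) by (apply Rmin_pos; lra).
    assert (f <= e0) by apply Rmin_l. assert (f <= 1) by apply Rmin_r.
    exists (b - f); split; [lra|split; [|apply P; lra]].
    apply (gg_hi al be M Y hbe hM hY Hal). assert (0 < M * f) by (apply Rmult_lt_0_compat; lra). nra.
  - set (q := b - (Y - (c1 - M*b))/M).
    assert (0 < (Y - (c1 - M*b))/M) by (apply Rdiv_lt_0_compat; lra).
    assert ((Y - (c1 - M*b))/M <= (2*Y+eta)/M) by (apply (div_le_M al be M Y hbe hM hY Hal); lra).
    assert (E : c1 - M * q = Y) by (unfold q; field; lra).
    exists q; split; [unfold q; lra|]. rewrite E. split; [apply (gg_hi al be M Y hbe hM hY Hal); lra|].
    unfold MC.pd. rewrite E, (KK_mid al be M Y hbe hM hY Hal Y) by lra.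
    apply Rle_trans with (KK (Y + eta) / M); auto. apply (div_le_M al be M Y hbe hM hY Hal).
    pose proof (KK_neg eta He).
    assert (KK (-Y - eta) <= KK (c1 - M*b)) by (apply (KK_mono al be M Y hbe hM hY Hal); auto). lra.
Qed.

Lemma Dt_small d : 0 < d -> exists eta, 0 < eta /\ exists T, 0 < T /\
  forall a b c0 c1, T <= b - a -> c0 - M * a <= Y + eta -> - Y - eta <= c1 - M * b ->
  exists u, is_step a b u /\ trR u a c0 /\ trL u b c1 /\ Dt u a b c0 c1 < d.
Proof.
  intros Hd. destruct (eta_choice (d/4) ltac:(lra)) as [eta [He HK]].
  exists eta; split; auto.
  set (W := 1 + (2*Y + eta)/M). assert (0 < (2*Y+eta)/M) by (apply Rdiv_lt_0_compat; lra).
  set (K := 4*be*Y^3/(M*d)). assert (0 < K) by (unfold K; apply Rdiv_lt_0_compat; [pose proof (pow_lt Y 3 hY); nra|nra]).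
  set (T := 2*W + K * (2*Y) / M + 1).
  assert (0 < K * (2*Y)/M) by (apply Rdiv_lt_0_compat; nra).
  exists T; split; [unfold T, W; lra|].
  intros a b c0 c1 HT Hc0 Hc1.
  destruct (left_point a c0 eta (d/4) He ltac:(lra) HK Hc0) as [p1 [Hp1 [G1 P1]]].
  destruct (right_point b c1 eta (d/4) He ltac:(lra) HK Hc1) as [q [Hq [G2 P2]]].
  set (D := q - p1). assert (HD : K * (2*Y)/M < D) by (unfold D, T, W in *; lra).
  assert (HD0 : 0 < D) by lra.
  destruct (choose_n al be M Y hbe hM hY Hal D HD0) as [m [C1 [C2 C3]]].
  pose proof (pos_INR m) as Pm. assert (Pn : 0 < INR (S m)) by (rewrite S_INR; lra).
  set (l := D / INR (S m)). assert (hl : 0 < l) by (apply Rdiv_lt_0_compat; lra).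
  assert (Eq : p1 + INR (S m) * l = q) by (unfold l, D; field; lra).
  destruct (comp_bound al be M Y hbe hM hY Hal a b c0 c1 p1 l m hl C1 ltac:(lra) ltac:(rewrite Eq; lra))
    as [u [Su [T1 [T2 B]]]].
  exists u; repeat split; auto. rewrite Eq in B. fold l in C2. rewrite G1, G2 in B.
  assert (Kn : K < INR (S m)).
  { apply Rlt_le_trans with (D * M / (2*Y)); auto.
    apply (Rmult_lt_reg_r (2*Y/M)); [apply Rdiv_lt_0_compat; lra|].
    replace (D * M / (2 * Y) * (2 * Y / M)) with D by (field; lra).
    replace (K * (2*Y/M)) with (K*(2*Y)/M) by (field; lra). auto. }
  assert (Mid : 2 * be * Y ^ 3 / (M * INR (S m)) < d/2).
  { replace (2 * be * Y ^ 3 / (M * INR (S m))) with (d/2 * (K / INR (S m))) by (unfold K; field; lra).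
    assert (K / INR (S m) < 1).
    { apply (Rmult_lt_reg_r (INR (S m))); auto. unfold Rdiv. rewrite Rmult_assoc, Rinv_l by lra. lra. }
    assert (0 < K / INR (S m)) by (apply Rdiv_lt_0_compat; lra). nra. }
  lra.
Qed.

End G3.

End MG3.
Import MG3.

Module MG4.
Set Default Proof Using "All".

Lemma regular_in_piece v a b c x : (forall y, a < y < b -> v y = c) -> a < x < b -> regular v x.
Proof.
  intros H Hx. exists (Rmin (x - a) (b - x)). split; [apply Rmin_pos; lra|].
  pose proof (Rmin_l (x-a) (b-x)); pose proof (Rmin_r (x-a) (b-x)).
  intros y Hy. rewrite !H; auto; lra.
Qed.

Section G4.
Variables al be M Y : R.
Hypothesis hbe : 0 < be.
Hypothesis hM : 0 < M.
Hypothesis hY : 0 < Y.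
Hypothesis Hal : al = 4*be*Y^3/(3*M).

Local Notation Dt := (MC.Dt al be M Y).
Local Notation gg := (MC.gg be M Y).
Local Notation jd := (MC.jd al be M Y).
Local Notation pd := (MC.pd be M Y).
Local Notation KK := (MC.KK be Y).

Lemma lim_right a b c K0 : a < b -> (forall x, a < x < b -> K0 <= c - M * x) -> K0 <= c - M * b.
Proof.
  intros Hab H. destruct (Rle_dec K0 (c - M*b)) as [r|r]; auto. exfalso.
  set (d := K0 - (c - M*b)). assert (0 < d) by (unfold d; lra).
  set (f := Rmin ((b-a)/2) (d/(2*M))). assert (0 < f) by (apply Rmin_pos; [lra|apply Rdiv_lt_0_compat; lra]).
  assert (f <= (b-a)/2) by apply Rmin_l. assert (f <= d/(2*M)) by apply Rmin_r.
  specialize (H (b - f) ltac:(lra)).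
  assert (M * f <= d/2) by (apply (Rmult_le_compat_l M) in H3; [|lra]; replace (M*(d/(2*M))) with (d/2) in H3 by (field; lra); lra).
  rewrite Rmult_minus_distr_l in H. unfold d in *. lra.
Qed.

Lemma lim_left a b c K0 : a < b -> (forall x, a < x < b -> c - M * x <= K0) -> c - M * a <= K0.
Proof.
  intros Hab H. destruct (Rle_dec (c - M*a) K0) as [r|r]; auto. exfalso.
  set (d := (c - M*a) - K0). assert (0 < d) by (unfold d; lra).
  set (f := Rmin ((b-a)/2) (d/(2*M))). assert (0 < f) by (apply Rmin_pos; [lra|apply Rdiv_lt_0_compat; lra]).
  assert (f <= (b-a)/2) by apply Rmin_l. assert (f <= d/(2*M)) by apply Rmin_r.
  specialize (H (a + f) ltac:(lra)).
  assert (M * f <= d/2) by (apply (Rmult_le_compat_l M) in H3; [|lra]; replace (M*(d/(2*M))) with (d/2) in H3 by (field; lra); lra).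
  rewrite Rmult_plus_distr_l in H. unfold d in *. lra.
Qed.

Lemma min_cmp v u a b c0 c1 : entire_local_minimizer al be (fun x => M * x) v -> a < b -> is_step a b u ->
  trR u a c0 -> trL u b c1 -> trR v a c0 -> trL v b c1 -> Dt v a b c0 c1 <= Dt u a b c0 c1.
Proof.
  intros [HS HL] Hab Su [e1 [He1 U1]] [e2 [He2 U2]] [e3 [He3 V1]] [e4 [He4 V2]].
  destruct (HL a b Hab) as [Sv Hmin].
  assert (Htr : same_traces a b u v).
  { split.
    - exists (Rmin e1 e3); split; [apply Rmin_pos; lra|]. intros x Hx.
      pose proof (Rmin_l e1 e3); pose proof (Rmin_r e1 e3). rewrite U1, V1; auto; lra.
    - exists (Rmin e2 e4); split; [apply Rmin_pos; lra|]. intros x Hx.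
      pose proof (Rmin_l e2 e4); pose proof (Rmin_r e2 e4). rewrite U2, V2; auto; lra. }
  pose proof (Hmin u Su Htr (Jn a b v) (Jn a b u) (Jn_spec a b v Hab Sv) (Jn_spec a b u Hab Su)) as G.
  rewrite (G_cost al be M v a b _ Hab Sv (Jn_spec a b v Hab Sv)) in G.
  rewrite (G_cost al be M u a b _ Hab Su (Jn_spec a b u Hab Su)) in G.
  unfold MC.Dt. lra.
Qed.

Lemma LB_hi v eta : 0 < eta -> forall a b, a < b -> is_step a b v ->
  (forall x, a < x < b -> regular v x -> Y + eta <= v x - M * x) ->
  forall c0 c1, trR v a c0 -> trL v b c1 -> be*((Y+eta)^2 - Y^2)*(b - a) <= Dt v a b c0 c1.
Proof.
  intros He. apply (step_ind v (fun a b => (forall x, a < x < b -> regular v x -> Y + eta <= v x - M * x) ->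
    forall c0 c1, trR v a c0 -> trL v b c1 -> be*((Y+eta)^2 - Y^2)*(b - a) <= Dt v a b c0 c1)).
  - intros a b c Hab H Hr c0 c1 H0 H1.
    assert (c0 = c) by (apply (trR_unique v a); auto; apply (trR_const a b); auto; lra).
    assert (c1 = c) by (apply (trL_unique v b); auto; apply (trL_const a b); auto; lra).
    subst c0 c1. rewrite (Dt_piece al be M Y hbe hM hY Hal v a b c Hab H).
    assert (Hb : Y + eta <= c - M * b).
    { apply (lim_right a b); auto. intros x Hx. rewrite <- (H x Hx). apply Hr; auto. apply (regular_in_piece v a b c); auto. }
    pose proof (KK_lb_hi al be M Y hbe hM hY Hal eta (c - M*a) (c - M*b) He Hb ltac:(nra)) as K.
    unfold MC.pd. apply (Rmult_le_reg_r M); auto.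
    replace ((KK (c - M * a) - KK (c - M * b)) / M * M) with (KK (c - M * a) - KK (c - M * b)) by (field; lra).
    replace (c - M * a - (c - M * b)) with (M * (b - a)) in K by ring. lra.
  - intros a p b Hp S1 S2 IH1 IH2 Hr c0 c1 H0 H1.
    destruct (step_trL a p v p S1) as [c Hc]; [lra|].
    destruct (step_trR p b v p S2) as [c' Hc']; [lra|].
    rewrite (Dt_split al be M Y hbe hM hY Hal v a p b c0 c1 c c' Hp (step_glue a p b v Hp S1 S2) Hc Hc').
    pose proof (IH1 ltac:(intros; apply Hr; auto; lra) c0 c H0 Hc).
    pose proof (IH2 ltac:(intros; apply Hr; auto; lra) c' c1 Hc' H1).
    pose proof (jd_nonneg al be M Y hbe hM hY Hal p c c'). lra.
Qed.

Lemma LB_lo v eta : 0 < eta -> forall a b, a < b -> is_step a b v ->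
  (forall x, a < x < b -> regular v x -> v x - M * x <= - Y - eta) ->
  forall c0 c1, trR v a c0 -> trL v b c1 -> be*((Y+eta)^2 - Y^2)*(b - a) <= Dt v a b c0 c1.
Proof.
  intros He. apply (step_ind v (fun a b => (forall x, a < x < b -> regular v x -> v x - M * x <= - Y - eta) ->
    forall c0 c1, trR v a c0 -> trL v b c1 -> be*((Y+eta)^2 - Y^2)*(b - a) <= Dt v a b c0 c1)).
  - intros a b c Hab H Hr c0 c1 H0 H1.
    assert (c0 = c) by (apply (trR_unique v a); auto; apply (trR_const a b); auto; lra).
    assert (c1 = c) by (apply (trL_unique v b); auto; apply (trL_const a b); auto; lra).
    subst c0 c1. rewrite (Dt_piece al be M Y hbe hM hY Hal v a b c Hab H).
    assert (Ha : c - M * a <= - Y - eta).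
    { apply (lim_left a b); auto. intros x Hx. rewrite <- (H x Hx). apply Hr; auto. apply (regular_in_piece v a b c); auto. }
    pose proof (KK_lb_lo al be M Y hbe hM hY Hal eta (c - M*a) (c - M*b) He Ha ltac:(nra)) as K.
    unfold MC.pd. apply (Rmult_le_reg_r M); auto.
    replace ((KK (c - M * a) - KK (c - M * b)) / M * M) with (KK (c - M * a) - KK (c - M * b)) by (field; lra).
    replace (c - M * a - (c - M * b)) with (M * (b - a)) in K by ring. lra.
  - intros a p b Hp S1 S2 IH1 IH2 Hr c0 c1 H0 H1.
    destruct (step_trL a p v p S1) as [c Hc]; [lra|].
    destruct (step_trR p b v p S2) as [c' Hc']; [lra|].
    rewrite (Dt_split al be M Y hbe hM hY Hal v a p b c0 c1 c c' Hp (step_glue a p b v Hp S1 S2) Hc Hc').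
    pose proof (IH1 ltac:(intros; apply Hr; auto; lra) c0 c H0 Hc).
    pose proof (IH2 ltac:(intros; apply Hr; auto; lra) c' c1 Hc' H1).
    pose proof (jd_nonneg al be M Y hbe hM hY Hal p c c'). lra.
Qed.

Variable v : R -> R.
Hypothesis Hmin : entire_local_minimizer al be (fun x => M * x) v.

Let HS : S_loc v := proj1 Hmin.

Lemma gamma_pos eta : 0 < eta -> 0 < be*((Y+eta)^2 - Y^2).
Proof. intros. apply Rmult_lt_0_compat; auto. nra. Qed.

Lemma good_left eta x0 : 0 < eta -> exists a', a' < x0 /\ regular v a' /\ v a' - M * a' <= Y + eta.
Proof.
  intros He. apply NNPP. intros Hn.
  pose proof (gamma_pos eta He) as Hg. set (g := be*((Y+eta)^2 - Y^2)) in *.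
  set (T := (2 + 4*al)/g). pose proof (al_pos al be M Y hbe hM hY Hal).
  assert (0 < T) by (apply Rdiv_lt_0_compat; lra).
  assert (Sv : is_step (x0 - T) x0 v) by (apply HS; lra).
  destruct (step_trR _ _ v (x0 - T) Sv) as [c0 Tr0]; [lra|].
  destruct (step_trL _ _ v x0 Sv) as [c1 Tr1]; [lra|].
  pose proof (LB_hi v eta He (x0 - T) x0 ltac:(lra) Sv) as LB.
  assert (LB' : g * (x0 - (x0 - T)) <= Dt v (x0 - T) x0 c0 c1).
  { apply LB; auto. intros x Hx Rx. destruct (Rle_dec (v x - M * x) (Y + eta)); [|lra].
    exfalso. apply Hn. exists x. repeat split; auto; lra. }
  destruct (Dt_bounded al be M Y hbe hM hY Hal (x0 - T) x0 c0 c1 ltac:(lra)) as [u [Su [U0 [U1 Bu]]]].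
  pose proof (min_cmp v u (x0 - T) x0 c0 c1 Hmin ltac:(lra) Su U0 U1 Tr0 Tr1).
  replace (x0 - (x0 - T)) with T in LB' by ring.
  assert (g * T = 2 + 4*al) by (unfold T; field; lra). lra.
Qed.

Lemma good_right eta x0 : 0 < eta -> exists b', x0 < b' /\ regular v b' /\ - Y - eta <= v b' - M * b'.
Proof.
  intros He. apply NNPP. intros Hn.
  pose proof (gamma_pos eta He) as Hg. set (g := be*((Y+eta)^2 - Y^2)) in *.
  set (T := (2 + 4*al)/g). pose proof (al_pos al be M Y hbe hM hY Hal).
  assert (0 < T) by (apply Rdiv_lt_0_compat; lra).
  assert (Sv : is_step x0 (x0 + T) v) by (apply HS; lra).
  destruct (step_trR _ _ v x0 Sv) as [c0 Tr0]; [lra|].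
  destruct (step_trL _ _ v (x0 + T) Sv) as [c1 Tr1]; [lra|].
  pose proof (LB_lo v eta He x0 (x0 + T) ltac:(lra) Sv) as LB.
  assert (LB' : g * ((x0 + T) - x0) <= Dt v x0 (x0 + T) c0 c1).
  { apply LB; auto. intros x Hx Rx. destruct (Rle_dec (- Y - eta) (v x - M * x)); [|lra].
    exfalso. apply Hn. exists x. repeat split; auto; lra. }
  destruct (Dt_bounded al be M Y hbe hM hY Hal x0 (x0 + T) c0 c1 ltac:(lra)) as [u [Su [U0 [U1 Bu]]]].
  pose proof (min_cmp v u x0 (x0 + T) c0 c1 Hmin ltac:(lra) Su U0 U1 Tr0 Tr1).
  replace ((x0 + T) - x0) with T in LB' by ring.
  assert (g * T = 2 + 4*al) by (unfold T; field; lra). lra.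
Qed.

Lemma Dt_zero a b c0 c1 : a < b -> trR v a c0 -> trL v b c1 -> Dt v a b c0 c1 = 0.
Proof.
  intros Hab H0 H1.
  pose proof (Cal al be M Y hbe hM hY Hal v a b Hab (HS a b Hab) c0 c1 H0 H1) as Pos.
  destruct (Rle_dec (Dt v a b c0 c1) 0) as [r|r]; [lra|exfalso].
  set (d := Dt v a b c0 c1). assert (Hd : 0 < d) by (unfold d; lra).
  destruct (Dt_small al be M Y hbe hM hY Hal d Hd) as [eta [He [T [HT Hsm]]]].
  destruct (good_left eta (a - T) He) as [a' [Ha' [Ra' Sa']]].
  destruct (good_right eta b He) as [b' [Hb' [Rb' Sb']]].
  destruct (Hsm a' b' (v a') (v b') ltac:(lra) Sa' Sb') as [u [Su [U0 [U1 Bu]]]].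
  pose proof (min_cmp v u a' b' (v a') (v b') Hmin ltac:(lra) Su U0 U1 (regular_trR v a' Ra') (regular_trL v b' Rb')) as Cm.
  assert (Sv : is_step a' b' v) by (apply HS; lra).
  destruct (step_trL a' b' v a Sv) as [cLa HLa]; [lra|].
  destruct (step_trR a' b' v b Sv) as [cRb HRb]; [lra|].
  rewrite (Dt_split al be M Y hbe hM hY Hal v a' a b' (v a') (v b') cLa c0 ltac:(lra) Sv HLa H0) in Cm.
  rewrite (Dt_split al be M Y hbe hM hY Hal v a b b' c0 (v b') c1 cRb ltac:(lra) (HS a b' ltac:(lra)) H1 HRb) in Cm.
  pose proof (Cal al be M Y hbe hM hY Hal v a' a ltac:(lra) (HS a' a ltac:(lra)) (v a') cLa (regular_trR v a' Ra') HLa).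
  pose proof (Cal al be M Y hbe hM hY Hal v b b' ltac:(lra) (HS b b' ltac:(lra)) cRb (v b') HRb (regular_trL v b' Rb')).
  pose proof (jd_nonneg al be M Y hbe hM hY Hal a cLa c0).
  pose proof (jd_nonneg al be M Y hbe hM hY Hal b c1 cRb).
  fold d in Cm. lra.
Qed.

Lemma GS1_min : GS1 M Y v.
Proof.
  intros p c [[e [He H]]|[e [He H]]].
  - assert (Z := Dt_zero p (p + e) c c ltac:(lra) (trR_const p (p+e) v c p H ltac:(lra)) (trL_const p (p+e) v c (p+e) H ltac:(lra))).
    rewrite (Dt_piece al be M Y hbe hM hY Hal v p (p+e) c ltac:(lra) H) in Z. unfold MC.pd in Z.
    assert (E : KK (c - M * (p + e)) = KK (c - M * p)).
    { apply (Rmult_eq_reg_r (/M)); [|apply Rinv_neq_0_compat; lra]. unfold Rdiv in Z. nra. }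
    destruct (KK_strict al be M Y hbe hM hY Hal (c - M*p) (c - M*(p+e)) ltac:(nra) E).
    apply Rabs_le. nra.
  - assert (Z := Dt_zero (p - e) p c c ltac:(lra) (trR_const (p-e) p v c (p-e) H ltac:(lra)) (trL_const (p-e) p v c p H ltac:(lra))).
    rewrite (Dt_piece al be M Y hbe hM hY Hal v (p-e) p c ltac:(lra) H) in Z. unfold MC.pd in Z.
    assert (E : KK (c - M * p) = KK (c - M * (p - e))).
    { apply (Rmult_eq_reg_r (/M)); [|apply Rinv_neq_0_compat; lra]. unfold Rdiv in Z. nra. }
    destruct (KK_strict al be M Y hbe hM hY Hal (c - M*(p-e)) (c - M*p) ltac:(nra) E).
    apply Rabs_le. nra.
Qed.

Lemma GS2_min : GS2 Y v.
Proof.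
  intros p c c' Hc Hc' ne.
  pose proof (GS1_min p c (or_intror Hc)) as B1. pose proof (GS1_min p c' (or_introl Hc')) as B2.
  apply abs_le in B1. apply abs_le in B2.
  assert (Sv : is_step (p - 1) (p + 1) v) by (apply HS; lra).
  destruct (step_trR _ _ v (p-1) Sv) as [c0 H0]; [lra|].
  destruct (step_trL _ _ v (p+1) Sv) as [c1 H1]; [lra|].
  pose proof (Dt_zero (p-1) (p+1) c0 c1 ltac:(lra) H0 H1) as Z.
  rewrite (Dt_split al be M Y hbe hM hY Hal v (p-1) p (p+1) c0 c1 c c' ltac:(lra) Sv Hc Hc') in Z.
  pose proof (Cal al be M Y hbe hM hY Hal v (p-1) p ltac:(lra) (HS (p-1) p ltac:(lra)) c0 c H0 Hc).
  pose proof (Cal al be M Y hbe hM hY Hal v p (p+1) ltac:(lra) (HS p (p+1) ltac:(lra)) c' c1 Hc' H1).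
  pose proof (jd_nonneg al be M Y hbe hM hY Hal p c c').
  assert (J : jd p c c' = 0) by lra.
  destruct (jd_zero al be M Y hbe hM hY Hal p c c' J ne). lra.
Qed.
End G4.

End MG4.
Import MG4.

Module MH.
Set Default Proof Using "All".

Lemma min_cmp_cost al be M v u a b c0 c1 : entire_local_minimizer al be (fun x => M * x) v -> a < b -> is_step a b u ->
  trR u a c0 -> trL u b c1 -> trR v a c0 -> trL v b c1 -> cost al be M v a b <= cost al be M u a b.
Proof.
  intros [HS HL] Hab Su [e1 [He1 U1]] [e2 [He2 U2]] [e3 [He3 V1]] [e4 [He4 V2]].
  destruct (HL a b Hab) as [Sv Hmin].
  assert (Htr : same_traces a b u v).
  { split.
    - exists (Rmin e1 e3); split; [apply Rmin_pos; lra|]. intros x Hx.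
      pose proof (Rmin_l e1 e3); pose proof (Rmin_r e1 e3). rewrite U1, V1; auto; lra.
    - exists (Rmin e2 e4); split; [apply Rmin_pos; lra|]. intros x Hx.
      pose proof (Rmin_l e2 e4); pose proof (Rmin_r e2 e4). rewrite U2, V2; auto; lra. }
  pose proof (Hmin u Su Htr (Jn a b v) (Jn a b u) (Jn_spec a b v Hab Sv) (Jn_spec a b u Hab Su)) as G.
  rewrite (G_cost al be M v a b _ Hab Sv (Jn_spec a b v Hab Sv)) in G.
  rewrite (G_cost al be M u a b _ Hab Su (Jn_spec a b u Hab Su)) in G. auto.
Qed.

Lemma jind_le c c' : 0 <= jind c c' <= 1.
Proof. unfold jind; destruct (Req_EM_T c c'); lra. Qed.

Lemma cost_ge_J al be M u a b : 0 <= al -> 0 <= be -> a < b -> is_step a b u -> al * INR (Jn a b u) <= cost al be M u a b.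
Proof.
  intros. unfold cost. pose proof (cost_nonneg_int M u a b H1 H2). nra.
Qed.

Section Z.
Variables al be : R.
Hypothesis hal : 0 < al.
Hypothesis hbe : 0 < be.

Definition wz (a b e c0 c1 : R) (x : R) : R := if Rlt_dec x (a + e) then c0 else if Rlt_dec x (b - e) then 0 else c1.

Lemma wz_cost a b e c0 c1 : 0 < e -> a + e < b - e ->
  is_step a b (wz a b e c0 c1) /\ trR (wz a b e c0 c1) a c0 /\ trL (wz a b e c0 c1) b c1 /\
  cost al be 0 (wz a b e c0 c1) a b <= 2 * al + be * (c0^2 + c1^2) * e.
Proof.
  intros He Hab. set (w := wz a b e c0 c1).
  assert (W1 : forall x, a < x < a + e -> w x = c0) by (intros; unfold w, wz; destruct (Rlt_dec x (a+e)); auto; lra).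
  assert (W2 : forall x, a + e < x < b - e -> w x = 0)
    by (intros; unfold w, wz; destruct (Rlt_dec x (a+e)); [lra|]; destruct (Rlt_dec x (b-e)); auto; lra).
  assert (W3 : forall x, b - e < x < b -> w x = c1)
    by (intros; unfold w, wz; destruct (Rlt_dec x (a+e)); [lra|]; destruct (Rlt_dec x (b-e)); auto; lra).
  assert (S1 : is_step a (a+e) w) by (apply (step_const _ _ _ c0); auto).
  assert (S2 : is_step (a+e) (b-e) w) by (apply (step_const _ _ _ 0); auto).
  assert (S3 : is_step (b-e) b w) by (apply (step_const _ _ _ c1); auto).
  assert (S23 : is_step (a+e) b w) by (apply (step_glue _ (b-e)); auto; lra).
  assert (S : is_step a b w) by (apply (step_glue _ (a+e)); auto; lra).
  split; auto. split; [apply (trR_const a (a+e)); auto; lra|]. split; [apply (trL_const (b-e) b); auto; lra|].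
  rewrite (cost_split al be 0 w a (a+e) b c0 0 ltac:(lra) S (trL_const a (a+e) w c0 (a+e) W1 ltac:(lra)) (trR_const (a+e) (b-e) w 0 (a+e) W2 ltac:(lra))).
  rewrite (cost_split al be 0 w (a+e) (b-e) b 0 c1 ltac:(lra) S23 (trL_const (a+e) (b-e) w 0 (b-e) W2 ltac:(lra)) (trR_const (b-e) b w c1 (b-e) W3 ltac:(lra))).
  rewrite (cost_const al be 0 w a (a+e) c0 ltac:(lra) W1), (cost_const al be 0 w (a+e) (b-e) 0 ltac:(lra) W2), (cost_const al be 0 w (b-e) b c1 ltac:(lra) W3).
  pose proof (jind_le c0 0). pose proof (jind_le 0 c1). unfold Pc.
  assert (al * jind c0 0 <= al) by nra. assert (al * jind 0 c1 <= al) by nra.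
  replace (be * (c0 ^ 2 * (a + e - a) - c0 * 0 * ((a + e) ^ 2 - a ^ 2) + 0 ^ 2 * ((a + e) ^ 3 - a ^ 3) / 3)) with (be * c0^2 * e) by (field).
  replace (be * (c1 ^ 2 * (b - (b - e)) - c1 * 0 * (b ^ 2 - (b - e) ^ 2) + 0 ^ 2 * (b ^ 3 - (b - e) ^ 3) / 3)) with (be * c1^2 * e) by field.
  replace (be * (0 ^ 2 * (b - e - (a + e)) - 0 * 0 * ((b - e) ^ 2 - (a + e) ^ 2) + 0 ^ 2 * ((b - e) ^ 3 - (a + e) ^ 3) / 3)) with 0 by field.
  nra.
Qed.

Lemma NJC v : forall a b, a < b -> is_step a b v -> (forall x, a < x < b -> ~ is_jump v x) ->
  forall c0, trR v a c0 -> trL v b c0 /\ cost al be 0 v a b = be * c0^2 * (b - a).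
Proof.
  intros a b Hab Sv. revert Hab Sv.
  apply (step_ind v (fun a b => (forall x, a < x < b -> ~ is_jump v x) ->
    forall c0, trR v a c0 -> trL v b c0 /\ cost al be 0 v a b = be * c0^2 * (b - a))); auto.
  - intros a' b' c Hab H NJ c0 H0.
    assert (c0 = c) by (apply (trR_unique v a'); auto; apply (trR_const a' b'); auto; lra). subst c0.
    split; [apply (trL_const a' b'); auto; lra|]. rewrite (cost_const al be 0 v a' b' c Hab H). unfold Pc. field.
  - intros a' p b' Hp S1 S2 IH1 IH2 NJ c0 H0.
    destruct (IH1 ltac:(intros; apply NJ; lra) c0 H0) as [T1 C1].
    destruct (step_trR p b' v p S2) as [c' Hc']; [lra|].
    assert (c0 = c') by (apply NNPP; intros ne; apply (NJ p Hp); apply (jump_iff v p c0 c' T1 Hc'); auto).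
    subst c'. destruct (IH2 ltac:(intros; apply NJ; lra) c0 Hc') as [T2 C2].
    split; auto. rewrite (cost_split al be 0 v a' p b' c0 c0 Hp (step_glue a' p b' v Hp S1 S2) T1 Hc').
    rewrite C1, C2. unfold jind. destruct (Req_EM_T c0 c0); [|tauto]. ring.
Qed.

Lemma Jn0_nojump a b v x : a < b -> is_step a b v -> Jn a b v = 0%nat -> a < x < b -> ~ is_jump v x.
Proof.
  intros Hab Sv E Hx J. pose proof (Jn_spec a b v Hab Sv) as [l [N [L H]]]. rewrite E in L.
  destruct l; [|simpl in L; lia]. apply (proj2 (H x)). split; auto.
Qed.

Variable v : R -> R.
Hypothesis Hmin : entire_local_minimizer al be (fun x => 0 * x) v.
Let HS : S_loc v := proj1 Hmin.

Lemma cost_lt3 a b c0 c1 : a < b -> trR v a c0 -> trL v b c1 -> cost al be 0 v a b < 3 * al.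
Proof.
  intros Hab H0 H1.
  set (K := be * (c0^2 + c1^2) + 1). assert (0 < K) by (unfold K; pose proof (pow2_ge_0 c0); pose proof (pow2_ge_0 c1); nra).
  set (e := Rmin ((b - a)/3) (al / (2*K))).
  assert (0 < e) by (apply Rmin_pos; [lra|apply Rdiv_lt_0_compat; lra]).
  assert (e <= (b-a)/3) by apply Rmin_l. assert (e <= al/(2*K)) by apply Rmin_r.
  destruct (wz_cost a b e c0 c1 H2 ltac:(lra)) as [Sw [T0 [T1 Cw]]].
  pose proof (min_cmp_cost al be 0 v _ a b c0 c1 Hmin Hab Sw T0 T1 H0 H1).
  assert (be * (c0^2 + c1^2) * e <= K * e) by (apply Rmult_le_compat_r; unfold K; lra).
  assert (K * e <= al/2) by (apply (Rmult_le_compat_l K) in H4; [|lra]; replace (K * (al/(2*K))) with (al/2) in H4 by (field; lra); lra).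
  lra.
Qed.

Lemma Jn_le2 a b : a < b -> (Jn a b v <= 2)%nat.
Proof.
  intros Hab. destruct (step_trR a b v a (HS a b Hab)) as [c0 H0]; [lra|].
  destruct (step_trL a b v b (HS a b Hab)) as [c1 H1]; [lra|].
  pose proof (cost_lt3 a b c0 c1 Hab H0 H1). pose proof (cost_ge_J al be 0 v a b ltac:(lra) ltac:(lra) Hab (HS a b Hab)).
  destruct (le_lt_dec (Jn a b v) 2); auto. assert (INR 3 <= INR (Jn a b v)) by (apply le_INR; lia).
  exfalso. simpl in H3. assert (al * 3 <= al * INR (Jn a b v)) by (apply Rmult_le_compat_l; lra). lra.
Qed.

Lemma Jn_max : exists a0 b0, a0 < b0 /\ forall a b, a < b -> (Jn a b v <= Jn a0 b0 v)%nat.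
Proof.
  destruct (classic (exists a b, a < b /\ (2 <= Jn a b v)%nat)) as [[a [b [Hab J]]]|N2].
  - exists a, b; split; auto. intros. pose proof (Jn_le2 a0 b0 H). lia.
  - destruct (classic (exists a b, a < b /\ (1 <= Jn a b v)%nat)) as [[a [b [Hab J]]]|N1].
    + exists a, b; split; auto. intros a0 b0 H. destruct (le_lt_dec (Jn a0 b0 v) 1); [lia|].
      exfalso; apply N2; exists a0, b0; split; auto; lia.
    + exists 0, 1; split; [lra|]. intros a0 b0 H. destruct (le_lt_dec (Jn a0 b0 v) 0); [lia|].
      exfalso; apply N1; exists a0, b0; split; auto; lia.
Qed.

Lemma far_nojump : exists a0 b0, a0 < b0 /\ (forall x, x <= a0 -> ~ is_jump v x) /\ (forall x, b0 <= x -> ~ is_jump v x).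
Proof.
  destruct Jn_max as [a0 [b0 [Hab Hm]]]. exists a0, b0. split; auto. split.
  - intros x Hx. assert (S : is_step (x - 1) b0 v) by (apply HS; lra).
    pose proof (jc_split (x-1) a0 b0 v _ _ ltac:(lra) (Jn_spec (x-1) a0 v ltac:(lra) (HS (x-1) a0 ltac:(lra))) (Jn_spec a0 b0 v Hab (HS a0 b0 Hab))) as J.
    pose proof (Hm (x-1) b0 ltac:(lra)) as Hle.
    rewrite (Jn_eq (x-1) b0 v _ ltac:(lra) S J) in Hle.
    destruct (excluded_middle_informative (is_jump v a0)) as [j|j].
    + exfalso. lia.
    + assert (E : Jn (x-1) a0 v = 0%nat) by lia.
      destruct (Req_dec x a0) as [->|ne]; auto.
      apply (Jn0_nojump (x-1) a0 v x ltac:(lra) (HS (x-1) a0 ltac:(lra)) E). lra.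
  - intros x Hx. assert (S : is_step a0 (x + 1) v) by (apply HS; lra).
    pose proof (jc_split a0 b0 (x+1) v _ _ ltac:(lra) (Jn_spec a0 b0 v Hab (HS a0 b0 Hab)) (Jn_spec b0 (x+1) v ltac:(lra) (HS b0 (x+1) ltac:(lra)))) as J.
    pose proof (Hm a0 (x+1) ltac:(lra)).
    rewrite (Jn_eq a0 (x+1) v _ ltac:(lra) S J) in H.
    destruct (excluded_middle_informative (is_jump v b0)) as [j|j].
    + exfalso. lia.
    + assert (E : Jn b0 (x+1) v = 0%nat) by lia.
      destruct (Req_dec x b0) as [->|ne]; auto.
      apply (Jn0_nojump b0 (x+1) v x ltac:(lra) (HS b0 (x+1) ltac:(lra)) E). lra.
Qed.


Lemma no_jump_traces x c c' : ~ is_jump v x -> trL v x c -> trR v x c' -> c = c'.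
Proof. intros NJ H1 H2. apply NNPP. intros ne. apply NJ. apply (jump_iff v x c c' H1 H2). auto. Qed.

Lemma left_zero : exists A, forall a'' c, a'' < A -> trR v a'' c -> c = 0.
Proof.
  destruct far_nojump as [a0 [b0 [Hab [NL NR]]]].
  set (A := a0 - 1).
  destruct (step_trR A a0 v A (HS A a0 ltac:(unfold A; lra))) as [cL HL]; [unfold A; lra|].
  assert (Key : forall a'' c, a'' < A -> trR v a'' c -> c = cL /\ cost al be 0 v a'' A = be * c^2 * (A - a'')).
  { intros a'' c Ha Hc. destruct (NJC v a'' A Ha (HS a'' A Ha) ltac:(intros; apply NL; unfold A in *; lra) c Hc) as [T C].
    split; auto. apply (no_jump_traces A); auto. apply NL; unfold A; lra. }
  assert (cL = 0).
  { apply NNPP. intros ne. assert (0 < cL^2) by (apply pow2_gt_0; auto).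
    set (T := 3 * al / (be * cL^2) + 1). assert (0 < be * cL^2) by (apply Rmult_lt_0_compat; lra).
    assert (0 < 3 * al / (be * cL^2)) by (apply Rdiv_lt_0_compat; lra).
    destruct (step_trR (A - T) A v (A - T) (HS (A - T) A ltac:(unfold T; lra))) as [c Hc]; [unfold T; lra|].
    destruct (Key (A - T) c ltac:(unfold T; lra) Hc) as [E C]. subst c.
    destruct (NJC v (A - T) A ltac:(unfold T; lra) (HS (A - T) A ltac:(unfold T; lra)) ltac:(intros; apply NL; unfold A in *; lra) cL Hc) as [T1 _].
    pose proof (cost_lt3 (A - T) A cL cL ltac:(unfold T; lra) Hc T1).
    rewrite C in H2. replace (A - (A - T)) with T in H2 by ring.
    assert (be * cL^2 * T = 3 * al + be * cL^2) by (unfold T; field; lra). lra. }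
  exists A. intros a'' c Ha Hc. destruct (Key a'' c Ha Hc). lra.
Qed.

Lemma right_zero : exists B, forall b'' c, B < b'' -> trL v b'' c -> c = 0.
Proof.
  destruct far_nojump as [a0 [b0 [Hab [NL NR]]]].
  set (B := b0 + 1).
  destruct (step_trR B (B+1) v B (HS B (B+1) ltac:(lra))) as [cR HR]; [lra|].
  assert (Key : forall b'', B < b'' -> trL v b'' cR /\ cost al be 0 v B b'' = be * cR^2 * (b'' - B)).
  { intros b'' Hb. apply (NJC v B b'' Hb (HS B b'' Hb) ltac:(intros; apply NR; unfold B in *; lra) cR HR). }
  assert (cR = 0).
  { apply NNPP. intros ne. assert (0 < cR^2) by (apply pow2_gt_0; auto).
    set (T := 3 * al / (be * cR^2) + 1). assert (0 < be * cR^2) by (apply Rmult_lt_0_compat; lra).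
    assert (0 < 3 * al / (be * cR^2)) by (apply Rdiv_lt_0_compat; lra).
    destruct (Key (B + T) ltac:(unfold T; lra)) as [T1 C].
    pose proof (cost_lt3 B (B + T) cR cR ltac:(unfold T; lra) HR T1).
    rewrite C in H2. replace (B + T - B) with T in H2 by ring.
    assert (be * cR^2 * T = 3 * al + be * cR^2) by (unfold T; field; lra). lra. }
  exists B. intros b'' c Hb Hc. destruct (Key b'' Hb) as [T1 _]. rewrite (trL_unique v b'' c cR); auto.
Qed.

Lemma reg_zero x : regular v x -> v x = 0.
Proof.
  intros Rx. destruct left_zero as [A HA]. destruct right_zero as [B HB].
  set (a' := Rmin A x - 1). set (b' := Rmax B x + 1).
  pose proof (Rmin_l A x). pose proof (Rmin_r A x). pose proof (Rmax_l B x). pose proof (Rmax_r B x).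
  assert (Hab : a' < b') by (unfold a', b'; lra).
  destruct (step_trR a' b' v a' (HS a' b' Hab)) as [c0 Tr0]; [lra|].
  destruct (step_trL a' b' v b' (HS a' b' Hab)) as [c1 Tr1]; [lra|].
  assert (c0 = 0) by (apply (HA a'); auto; unfold a'; lra). subst c0.
  assert (c1 = 0) by (apply (HB b'); auto; unfold b'; lra). subst c1.
  set (z := fun _ : R => 0).
  assert (Z : forall y, a' < y < b' -> z y = 0) by (intros; reflexivity).
  pose proof (min_cmp_cost al be 0 v z a' b' 0 0 Hmin Hab (step_const a' b' z 0 Z) (trR_const a' b' z 0 a' Z ltac:(lra)) (trL_const a' b' z 0 b' Z ltac:(lra)) Tr0 Tr1) as Cm.
  rewrite (cost_const al be 0 z a' b' 0 Hab Z) in Cm. unfold Pc in Cm.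
  pose proof (cost_ge_J al be 0 v a' b' ltac:(lra) ltac:(lra) Hab (HS a' b' Hab)) as CJ.
  replace (be * (0 ^ 2 * (b' - a') - 0 * 0 * (b' ^ 2 - a' ^ 2) + 0 ^ 2 * (b' ^ 3 - a' ^ 3) / 3)) with 0 in Cm by field.
  assert (IJ : INR (Jn a' b' v) <= 0).
  { assert (Q : al * INR (Jn a' b' v) <= al * 0) by lra. apply Rmult_le_reg_l in Q; auto. }
  assert (E : Jn a' b' v = 0%nat) by (destruct (Jn a' b' v); auto; rewrite S_INR in IJ; pose proof (pos_INR n); lra).
  assert (Hx : a' < x < b') by (unfold a', b'; lra).
  destruct (NJC v a' x ltac:(lra) (HS a' x ltac:(lra)) ltac:(intros; apply (Jn0_nojump a' b' v); auto; lra) 0 Tr0) as [T _].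
  apply (trL_unique v x); auto. apply regular_trL; auto.
Qed.

End Z.

Lemma oblique_zero al be tau x : oblique al be 0 tau x = 0.
Proof. unfold oblique. destruct (Req_EM_T 0 0); [auto|tauto]. Qed.

Lemma zero_case al be v : 0 < al -> 0 < be ->
  (entire_local_minimizer al be (fun x => 0 * x) v <->
   (S_loc v /\ exists tau, -1 <= tau <= 1 /\ same_class v (oblique al be 0 tau))).
Proof.
  intros hal hbe. split.
  - intros Hmin. pose proof (proj1 Hmin) as HS. split; auto. exists 0. split; [lra|].
    intros a b Hab. destruct (HS a b Hab) as [l [Hl Hs]]. exists l. intros x Hx Hn.
    rewrite oblique_zero. apply (reg_zero al be hal hbe v Hmin). apply (reg_of_notin a b v l x Hs Hx Hn).
  - intros [HS [tau [_ Hc]]].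
    assert (Hc0 : same_class v (fun _ => 0)) by (apply (same_class_ext v _ _ Hc); intros; apply oblique_zero).
    assert (TR : forall p c, trR v p c -> c = 0).
    { intros p c H. apply (same_class_trR v (fun _ => 0)) in H; auto. destruct H as [e [He H]]. rewrite <- (H (p + e/2)); auto; lra. }
    assert (TL : forall p c, trL v p c -> c = 0).
    { intros p c H. apply (same_class_trL v (fun _ => 0)) in H; auto. destruct H as [e [He H]]. rewrite <- (H (p - e/2)); auto; lra. }
    assert (C0 : forall a b, a < b -> is_step a b v -> cost al be 0 v a b = 0).
    { apply (step_ind v (fun a b => cost al be 0 v a b = 0)).
      - intros a b c Hab H. rewrite (cost_const al be 0 v a b c Hab H).
        assert (c = 0) by (apply (TR a); apply (trR_const a b); auto; lra). subst c. unfold Pc. field.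
      - intros a p b Hp S1 S2 E1 E2.
        destruct (step_trL a p v p S1) as [c Kc]; [lra|]. destruct (step_trR p b v p S2) as [c' Kc']; [lra|].
        rewrite (cost_split al be 0 v a p b c c' Hp (step_glue a p b v Hp S1 S2) Kc Kc').
        rewrite E1, E2, (TL p c Kc), (TR p c' Kc'). unfold jind. destruct (Req_EM_T 0 0); [ring|tauto]. }
    split; auto. intros a b Hab. split; [apply HS; auto|].
    intros u Su Htr n m Hn Hm.
    rewrite (G_cost al be 0 v a b n Hab (HS a b Hab) Hn), (G_cost al be 0 u a b m Hab Su Hm).
    rewrite (C0 a b Hab (HS a b Hab)).
    pose proof (cost_ge_J al be 0 u a b ltac:(lra) ltac:(lra) Hab Su). pose proof (pos_INR (Jn a b u)). nra.
Qed.


End MH.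
Import MH.

Module MI.

Lemma pos_case al be M v : 0 < al -> 0 < be -> 0 < M ->
  (entire_local_minimizer al be (fun x => M * x) v <->
   (S_loc v /\ exists tau, -1 <= tau <= 1 /\ same_class v (oblique al be M tau))).
Proof.
  intros hal hbe hM.
  set (H := Hpar al be M). set (Y := Vpar al be M).
  assert (hH : 0 < H) by apply Hpar_pos.
  assert (hYe : Y = M * H) by reflexivity.
  assert (hY : 0 < Y) by (rewrite hYe; nra).
  assert (Hal : al = 4 * be * Y^3 / (3 * M)) by (apply Vpar_alpha; auto; lra).
  split.
  - intros Hmin. pose proof (proj1 Hmin) as HS. split; auto.
    pose proof (GS1_min al be M Y hbe hM hY Hal v Hmin) as G1.
    pose proof (GS2_min al be M Y hbe hM hY Hal v Hmin) as G2.
    destruct (ob_of_GS M H Y hM hH hYe v HS G1 G2) as [tau [Ht Hc]].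
    exists tau; split; auto. apply (same_class_ext v _ _ Hc). intros x. rewrite oblique_ob by lra. reflexivity.
  - intros [HS [tau [Ht Hc]]].
    assert (Hc' : same_class v (ob H Y tau)) by (apply (same_class_ext v _ _ Hc); intros x; rewrite oblique_ob by lra; reflexivity).
    apply (minimizer_of_GS al be M Y hbe hM hY Hal v HS).
    + apply (GS1_ob M H Y tau hM hH hYe v Hc').
    + apply (GS2_ob M H Y tau hM hH hYe v Hc').
Qed.

Definition negf (u : R -> R) := fun x => - u x.

Lemma step_neg a b u : is_step a b u -> is_step a b (negf u).
Proof. intros [l [Hl Hs]]. exists l; split; auto. intros x y H1 H2 H3 H4. unfold negf. rewrite (Hs x y); auto. Qed.

Lemma jump_neg u x : is_jump u x -> is_jump (negf u) x.
Proof.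
  intros J eps He. destruct (J eps He) as [y [z [H1 [H2 [H3 [H4 H5]]]]]].
  exists y, z; repeat split; auto. unfold negf. intros E. apply H5. lra.
Qed.
Lemma jump_neg_iff u x : is_jump (negf u) x <-> is_jump u x.
Proof.
  split; [|apply jump_neg]. intros J. replace u with (negf (negf u)); [apply jump_neg; auto|].
  apply functional_extensionality; intros; unfold negf; ring.
Qed.

Lemma jc_neg a b u n : jump_count a b u n -> jump_count a b (negf u) n.
Proof.
  intros [l [N [L H]]]. exists l; split; auto; split; auto. intros x. rewrite jump_neg_iff. apply H.
Qed.

Lemma negf_negf u : negf (negf u) = u.
Proof. apply functional_extensionality; intros; unfold negf; ring. Qed.

Lemma G_neg al be M a b u n : G_with al be (fun x => (-M) * x) a b (negf u) n = G_with al be (fun x => M * x) a b u n.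
Proof.
  unfold G_with. f_equal. f_equal. f_equal. apply functional_extensionality; intros x; unfold negf; ring.
Qed.

Lemma min_neg al be M v : entire_local_minimizer al be (fun x => M * x) v ->
  entire_local_minimizer al be (fun x => (-M) * x) (negf v).
Proof.
  intros [HS HL]. split; [intros a b Hab; apply step_neg; auto|].
  intros a b Hab. destruct (HL a b Hab) as [Sv Hm]. split; [apply step_neg; auto|].
  intros u Su [[e1 [He1 T1]] [e2 [He2 T2]]] n m Hn Hm'.
  rewrite G_neg. rewrite <- (negf_negf u). rewrite G_neg.
  apply Hm.
  - apply step_neg; auto.
  - split; [exists e1; split; auto; intros x Hx; unfold negf; rewrite T1; auto; unfold negf; ring|].
    exists e2; split; auto; intros x Hx; unfold negf; rewrite T2; auto; unfold negf; ring.
  - rewrite <- (negf_negf v). apply jc_neg; auto.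
  - apply jc_neg; auto.
Qed.

Lemma min_neg_iff al be M v : entire_local_minimizer al be (fun x => M * x) v <->
  entire_local_minimizer al be (fun x => (-M) * x) (negf v).
Proof.
  split; [apply min_neg|]. intros Hm. apply min_neg in Hm. rewrite negf_negf in Hm.
  replace (fun x => - - M * x) with (fun x => M * x) in Hm; auto.
  apply functional_extensionality; intros; ring.
Qed.

Lemma oblique_neg al be M tau x : oblique al be (-M) tau x = - oblique al be M tau x.
Proof.
  unfold oblique. destruct (Req_EM_T (-M) 0) as [e|ne]; destruct (Req_EM_T M 0) as [e'|ne']; try lra.
  unfold Vpar, Hpar, stairHV. replace ((-M)^2) with (M^2) by ring. ring.
Qed.

Lemma S_loc_neg v : S_loc v -> S_loc (negf v).
Proof. intros H a b Hab. apply step_neg; auto. Qed.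

Lemma same_class_neg v w : same_class v w -> same_class (negf v) (negf w).
Proof. intros H a b Hab. destruct (H a b Hab) as [l Hl]. exists l. intros. unfold negf. rewrite Hl; auto. Qed.

Theorem main_thm (alpha beta M : R) (halpha : 0 < alpha) (hbeta : 0 < beta) (v : R -> R) :
  entire_local_minimizer alpha beta (fun x => M * x) v <->
  (S_loc v /\ exists tau0, -1 <= tau0 <= 1 /\ same_class v (oblique alpha beta M tau0)).
Proof.
  destruct (Rtotal_order M 0) as [lt|[eq|gt]].
  - rewrite min_neg_iff. rewrite (pos_case alpha beta (-M) (negf v) halpha hbeta ltac:(lra)).
    split.
    + intros [HS [tau [Ht Hc]]]. split.
      * rewrite <- (negf_negf v). apply S_loc_neg; auto.
      * exists tau; split; auto. rewrite <- (negf_negf v). apply (same_class_ext _ (negf (oblique alpha beta (-M) tau))).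
        -- apply same_class_neg; auto.
        -- intros x. unfold negf. rewrite oblique_neg. ring.
    + intros [HS [tau [Ht Hc]]]. split; [apply S_loc_neg; auto|].
      exists tau; split; auto. apply (same_class_ext _ (negf (oblique alpha beta M tau))).
      * apply same_class_neg; auto.
      * intros x. unfold negf. rewrite oblique_neg. ring.
  - subst M. apply zero_case; auto.
  - apply pos_case; auto.
Qed.

End MI.
Import MI.

Theorem proposition4p4 (alpha beta M : R) (halpha : 0 < alpha) (hbeta : 0 < beta)
  (v : R -> R) :
  entire_local_minimizer alpha beta (fun x => M * x) v <->
  (S_loc v /\ exists tau0, -1 <= tau0 <= 1 /\ same_class v (oblique alpha beta M tau0)).
Proof.
  exact (main_thm alpha beta M halpha hbeta v).
Qed.
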